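(* Under the setting below, assume in addition $0<\underline h\le h_{\rm in}\le\overline h<\infty$ and $0\le A_{\rm in}\le 1$, and set $K:=|\overline f|+|\underline f|$. Then $h_m\ge0$ on $\Omega\times[0,T]$. Moreover, for every $t\in[0,T]$ with $$t\le \frac{\underline h}{6K}\qquad\text{and}\qquad \exp\Big(\int_0^t\|\operatorname{div}\vec u^o(s)\|_{L^\infty(\Omega)}\,ds\Big)\le 2,$$ one has $\tfrac14\underline h\le h_m(\cdot,t)\le 4\overline h$ on $\Omega$; and for every $t\in[0,T]$ with $t\le \int_\Omega h_{\rm in}\,dx\big/\big(6K|\Omega|\big)$ one has $$\tfrac12\int_\Omega h_{\rm in}\,dx\le\int_\Omega h_m(x,t)\,dx\le 2\int_\Omega h_{\rm in}\,dx.$$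
   Context: Setting: $\Omega=\mathbb T^2$, $\omega,\nu\in(0,1)$, $T>0$, $\vec u^o:\Omega\times[0,T]\to\mathbb R^2$ a given smooth velocity field, and $(h_m,A_m)$ a sufficiently regular (e.g. classical) solution on $[0,T]$ of $$\partial_t h_m+\operatorname{div}(h_m\vec u^o)=\mathcal S_{h_m,\omega,\nu},\qquad \partial_tA_m+\operatorname{div}(A_m\vec u^o)=\mathcal S_{A_m,\omega,\nu}+A_m\operatorname{div}\vec u^o\cdot\chi^\omega_{A_m},$$ with $h_m(0)=h_{\rm in}$, $A_m(0)=A_{\rm in}$. Here $\psi^+=\max\{\psi,0\}$, $f:\mathbb R\to\mathbb R$ is smooth with $\underline f\le f\le\overline f$, $h_0>0$, and for functions $h,A$: $\chi^\nu_h=h^+/(h^++\nu)$, $\mathcal S_{h,\omega,\nu}=[f(h^+/(A^++\omega))A+(1-A)f(0)]\chi^\nu_h$, $\mathcal S_{A,\omega,\nu}=\frac{(f(0))^+}{h_0+\nu}(1-A)-\frac{A}{2h^++\nu}\cdot\frac{\sqrt{|\mathcal S_{h,\omega,\nu}|^2+\omega^2}-\mathcal S_{h,\omega,\nu}}{2}$, $\chi^\omega_A=1-\frac{(1-A)^+}{(1-A)^++\omega}$, evaluated at $(h_m,A_m)$. *)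

(* Defs.v *)
From Stdlib Require Import Reals Lra.
From Coquelicot Require Import Coquelicot.
Open Scope R_scope.

(* The torus T^2 is realised as (R/Z)^2: functions on R^2 that are 1-periodic
   in each variable; the fundamental domain is [0,1]^2, so |Omega| = 1. *)
Definition torus_meas : R := 1.

Definition periodic2 (g : R -> R -> R) : Prop :=
  forall x y, g (x + 1) y = g x y /\ g x (y + 1) = g x y.

Definition periodic3 (g : R -> R -> R -> R) : Prop :=
  forall x y t, g (x + 1) y t = g x y t /\ g x (y + 1) t = g x y t.

Definition intOmega (g : R -> R -> R) : R :=
  RInt (fun x => RInt (fun y => g x y) 0 1) 0 1.

Definition dx (g : R -> R -> R -> R) : R -> R -> R -> R :=
  fun x y t => Derive (fun z => g z y t) x.
Definition dy (g : R -> R -> R -> R) : R -> R -> R -> R :=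
  fun x y t => Derive (fun z => g x z t) y.
Definition dt (g : R -> R -> R -> R) : R -> R -> R -> R :=
  fun x y t => Derive (fun z => g x y z) t.

Inductive dir := Dx | Dy | Dt.
Definition pd (d : dir) (g : R -> R -> R -> R) : R -> R -> R -> R :=
  match d with Dx => dx g | Dy => dy g | Dt => dt g end.
Definition ex_pd (d : dir) (g : R -> R -> R -> R) (x y t : R) : Prop :=
  match d with
  | Dx => ex_derive (fun z => g z y t) x
  | Dy => ex_derive (fun z => g x z t) y
  | Dt => ex_derive (fun z => g x y z) t
  end.
Definition iterD (l : list dir) (g : R -> R -> R -> R) := List.fold_right pd g l.

Definition joint3 (g : R -> R -> R -> R) : R * R * R -> R :=
  fun p => g (fst (fst p)) (snd (fst p)) (snd p).

Definition smooth3 (g : R -> R -> R -> R) : Prop :=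
  forall l : list dir,
    (forall p, continuous (joint3 (iterD l g)) p) /\
    (forall d x y t, ex_pd d (iterD l g) x y t).

Definition smooth1 (f : R -> R) : Prop := forall n x, ex_derive_n f n x.

Definition divu (u1 u2 : R -> R -> R -> R) : R -> R -> R -> R :=
  fun x y t => dx u1 x y t + dy u2 x y t.
Definition divflux (g u1 u2 : R -> R -> R -> R) : R -> R -> R -> R :=
  fun x y t => dx (fun a b c => g a b c * u1 a b c) x y t
             + dy (fun a b c => g a b c * u2 a b c) x y t.

(* ||div u(s)||_{L^infty(Omega)} (essential sup = sup for continuous fields) *)
Definition LinfOmega (g : R -> R -> R) : R :=
  real (Lub_Rbar (fun r => exists x y, 0 <= x <= 1 /\ 0 <= y <= 1 /\ r = Rabs (g x y))).

Definition pos (p : R) : R := Rmax p 0.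

Definition chi_h (nu h : R) : R := pos h / (pos h + nu).
Definition S_h (f : R -> R) (om nu h A : R) : R :=
  (f (pos h / (pos A + om)) * A + (1 - A) * f 0) * chi_h nu h.
Definition S_A (f : R -> R) (h0 om nu h A : R) : R :=
  pos (f 0) / (h0 + nu) * (1 - A)
  - A / (2 * pos h + nu) *
    ((sqrt (S_h f om nu h A ^ 2 + om ^ 2) - S_h f om nu h A) / 2).
Definition chi_A (om A : R) : R := 1 - pos (1 - A) / (pos (1 - A) + om).

Definition classical_reg (T : R) (g : R -> R -> R -> R) : Prop :=
  (forall x y t, 0 <= t <= T ->
     filterlim (joint3 g) (within (fun p => 0 <= snd p <= T) (locally (x, y, t)))
               (locally (g x y t))) /\
  (forall d x y t, 0 < t < T -> ex_pd d g x y t) /\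
  (forall d x y t, 0 < t < T ->
     filterlim (joint3 (pd d g)) (within (fun p => 0 < snd p < T) (locally (x, y, t)))
               (locally (pd d g x y t))).

(* Main.v *)
Require Import Defs.
From Stdlib Require Import Reals.
From Coquelicot Require Import Coquelicot.
From Stdlib Require Import ZArith Lra Lia Classical ClassicalEpsilon FunctionalExtensionality.
Open Scope R_scope.


Definition ctd (D : R -> Prop) (g : R -> R -> R -> R) (x y t : R) : Prop :=
  forall eps, 0 < eps -> exists d, 0 < d /\ forall x' y' t',
    Rabs (x' - x) < d -> Rabs (y' - y) < d -> Rabs (t' - t) < d -> D t' ->
    Rabs (g x' y' t' - g x y t) < eps.

Lemma ball_R_iff (a e b : R) : ball a e b <-> Rabs (b - a) < e.
Proof. unfold ball; simpl; unfold AbsRing_ball, abs, minus, plus, opp; simpl. tauto. Qed.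

Lemma ctd_of_filt (D : R -> Prop) g x y t :
  filterlim (joint3 g) (within (fun p => D (snd p)) (locally (x, y, t))) (locally (g x y t)) ->
  ctd D g x y t.
Proof.
intros H eps He.
destruct (H (ball (g x y t) (mkposreal _ He))) as [d Hd]. apply locally_ball.
exists d. split. apply cond_pos. intros x' y' t' H1 H2 H3 HD.
assert (K := Hd (x', y', t')).
assert (HB : ball (x, y, t) d (x', y', t')).
{ split. split; apply ball_R_iff; assumption. apply ball_R_iff; assumption. }
specialize (K HB HD). apply ball_R_iff in K. exact K.
Qed.

Lemma ctd_of_cont g x y t :
  continuous (joint3 g) (x, y, t) -> ctd (fun _ => True) g x y t.
Proof.
intros H eps He.
destruct (H (ball (g x y t) (mkposreal _ He))) as [d Hd]. apply locally_ball.
exists d. split. apply cond_pos. intros x' y' t' H1 H2 H3 HD.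
assert (K := Hd (x', y', t')).
assert (HB : ball (x, y, t) d (x', y', t')).
{ split. split; apply ball_R_iff; assumption. apply ball_R_iff; assumption. }
specialize (K HB). apply ball_R_iff in K. exact K.
Qed.

Lemma ctd_mono (D1 D2 : R -> Prop) g x y t :
  (forall s, D2 s -> D1 s) -> ctd D1 g x y t -> ctd D2 g x y t.
Proof.
intros HD H eps He. destruct (H eps He) as [d [Hd K]]. exists d; split; auto.
Qed.

Lemma ctd_interior (D : R -> Prop) g x y t a b :
  a < t < b -> (forall s, a < s < b -> D s) -> ctd D g x y t -> ctd (fun _ => True) g x y t.
Proof.
intros Ht HD H eps He. destruct (H eps He) as [d [Hd K]].
exists (Rmin d (Rmin (t - a) (b - t))). split.
{ repeat apply Rmin_pos; lra. }
intros x' y' t' H1 H2 H3 _.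
assert (Hm1 := Rmin_l d (Rmin (t - a) (b - t))).
assert (Hm2 := Rmin_r d (Rmin (t - a) (b - t))).
assert (Hm3 := Rmin_l (t - a) (b - t)).
assert (Hm4 := Rmin_r (t - a) (b - t)).
apply K; try lra. apply HD. apply Rabs_def2 in H3. lra.
Qed.

Lemma ctd_plus D g1 g2 x y t : ctd D g1 x y t -> ctd D g2 x y t ->
  ctd D (fun a b c => g1 a b c + g2 a b c) x y t.
Proof.
intros H1 H2 eps He.
destruct (H1 (eps/2)) as [d1 [Hd1 K1]]. lra.
destruct (H2 (eps/2)) as [d2 [Hd2 K2]]. lra.
exists (Rmin d1 d2). split. apply Rmin_pos; lra.
intros x' y' t' A1 A2 A3 HD.
assert (Hm1 := Rmin_l d1 d2). assert (Hm2 := Rmin_r d1 d2).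
specialize (K1 x' y' t'). specialize (K2 x' y' t').
assert (E1 : Rabs (g1 x' y' t' - g1 x y t) < eps/2) by (apply K1; auto; lra).
assert (E2 : Rabs (g2 x' y' t' - g2 x y t) < eps/2) by (apply K2; auto; lra).
replace (g1 x' y' t' + g2 x' y' t' - (g1 x y t + g2 x y t)) with
  ((g1 x' y' t' - g1 x y t) + (g2 x' y' t' - g2 x y t)) by ring.
eapply Rle_lt_trans. apply Rabs_triang. lra.
Qed.

Lemma ctd_opp D g x y t : ctd D g x y t -> ctd D (fun a b c => - g a b c) x y t.
Proof.
intros H eps He. destruct (H eps He) as [d [Hd K]]. exists d; split; auto.
intros. replace (- g x' y' t' - - g x y t) with (-(g x' y' t' - g x y t)) by ring.
rewrite Rabs_Ropp. auto.
Qed.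

Lemma ctd_mult D g1 g2 x y t : ctd D g1 x y t -> ctd D g2 x y t ->
  ctd D (fun a b c => g1 a b c * g2 a b c) x y t.
Proof.
intros H1 H2 eps He.
set (M := Rabs (g1 x y t) + Rabs (g2 x y t) + 1).
assert (HM : 0 < M) by (unfold M; assert (Hx := Rabs_pos (g1 x y t)); assert (Hy := Rabs_pos (g2 x y t)); lra).
set (e := Rmin 1 (eps / (3 * M))).
assert (He0 : 0 < e) by (apply Rmin_pos; [lra | apply Rdiv_lt_0_compat; lra]).
destruct (H1 e He0) as [d1 [Hd1 K1]].
destruct (H2 e He0) as [d2 [Hd2 K2]].
exists (Rmin d1 d2). split. apply Rmin_pos; lra.
intros x' y' t' A1 A2 A3 HD.
assert (Hm1 := Rmin_l d1 d2). assert (Hm2 := Rmin_r d1 d2).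
assert (E1 : Rabs (g1 x' y' t' - g1 x y t) < e) by (apply K1; auto; lra).
assert (E2 : Rabs (g2 x' y' t' - g2 x y t) < e) by (apply K2; auto; lra).
set (a := g1 x y t) in *. set (b := g2 x y t) in *.
set (a' := g1 x' y' t') in *. set (b' := g2 x' y' t') in *.
assert (He1 : e <= 1) by apply Rmin_l.
assert (He2 : e <= eps / (3 * M)) by apply Rmin_r.
assert (He3 : e * (3 * M) <= eps).
{ apply Rmult_le_reg_r with (/ (3*M)). apply Rinv_0_lt_compat; lra.
  rewrite Rmult_assoc, Rinv_r by lra. lra. }
replace (a' * b' - a * b) with ((a' - a) * (b' - b) + (a' - a) * b + a * (b' - b)) by ring.
eapply Rle_lt_trans. apply Rabs_triang.
eapply Rle_lt_trans. apply Rplus_le_compat_r. apply Rabs_triang.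
rewrite !Rabs_mult.
assert (Ha := Rabs_pos a). assert (Hb := Rabs_pos b).
assert (Ha' := Rabs_pos (a' - a)). assert (Hb' := Rabs_pos (b' - b)).
assert (P1 : Rabs (a' - a) * Rabs (b' - b) <= e * e) by (apply Rmult_le_compat; lra).
assert (P2 : Rabs (a' - a) * Rabs b <= e * Rabs b) by (apply Rmult_le_compat_r; lra).
assert (P3 : Rabs a * Rabs (b' - b) <= Rabs a * e) by (apply Rmult_le_compat_l; lra).
assert (P4 : e * e <= e * 1) by (apply Rmult_le_compat_l; lra).
unfold M in He3. nra.
Qed.

Lemma ctd_const_t D (phi : R -> R) x y t :
  (forall eps, 0 < eps -> exists d, 0 < d /\ forall t', Rabs (t' - t) < d -> Rabs (phi t' - phi t) < eps) ->
  ctd D (fun _ _ c => phi c) x y t.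
Proof.
intros H eps He. destruct (H eps He) as [d [Hd K]]. exists d; split; auto.
Qed.

Lemma ctd_ext D g1 g2 x y t :
  (forall a b c, D c -> g1 a b c = g2 a b c) -> D t -> ctd D g1 x y t -> ctd D g2 x y t.
Proof.
intros E Dt H eps He. destruct (H eps He) as [d [Hd K]]. exists d; split; auto.
intros. rewrite <- !E by auto. auto.
Qed.
Lemma isd_plus (f g : R -> R) x a b : is_derive f x a -> is_derive g x b -> is_derive (fun z => f z + g z) x (a + b).
Proof. intros. apply (is_derive_plus f g x a b); auto. Qed.
Lemma isd_scal (f : R -> R) x a c : is_derive f x a -> is_derive (fun z => c * f z) x (c * a).
Proof. intros. apply (is_derive_scal f x c a); auto. Qed.
Lemma isd_const x c : is_derive (fun _ : R => c) x 0.
Proof. apply (is_derive_const c x). Qed.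
Lemma isd_mult (f g : R -> R) x a b : is_derive f x a -> is_derive g x b -> is_derive (fun z => f z * g z) x (a * g x + f x * b).
Proof. intros. apply (is_derive_mult f g x a b); auto. intros; apply Rmult_comm. Qed.


Lemma tube (g : R -> R -> R -> R -> R) (D : R -> R -> Prop) p0 q0 :
  D p0 q0 ->
  (forall a b, 0 <= a <= 1 -> 0 <= b <= 1 -> forall eps, 0 < eps -> exists d, 0 < d /\
     forall a' b' p q, Rabs (a' - a) < d -> Rabs (b' - b) < d -> Rabs (p - p0) < d ->
       Rabs (q - q0) < d -> D p q -> Rabs (g a' b' p q - g a b p0 q0) < eps) ->
  forall eps, 0 < eps -> exists d, 0 < d /\
    forall a b p q, 0 <= a <= 1 -> 0 <= b <= 1 -> Rabs (p - p0) < d -> Rabs (q - q0) < d ->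
      D p q -> Rabs (g a b p q - g a b p0 q0) < eps.
Proof.
intros HD H eps He.
assert (He2 : 0 < eps / 2) by lra.
assert (Hc : forall a b, exists d : posreal, (0 <= a <= 1 -> 0 <= b <= 1 ->
     forall a' b' p q, Rabs (a' - a) < d -> Rabs (b' - b) < d -> Rabs (p - p0) < d ->
       Rabs (q - q0) < d -> D p q -> Rabs (g a' b' p q - g a b p0 q0) < eps / 2)).
{ intros a b. destruct (classic (0 <= a <= 1 /\ 0 <= b <= 1)) as [[Ha Hb]|Hn].
  - destruct (H a b Ha Hb _ He2) as [d [Hd K]]. exists (mkposreal d Hd). intros _ _. exact K.
  - exists (mkposreal 1 Rlt_0_1). intros Ha Hb. exfalso; tauto. }
destruct (choice (fun (ab : R * R) (d : posreal) => 0 <= fst ab <= 1 -> 0 <= snd ab <= 1 ->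
     forall a' b' p q, Rabs (a' - fst ab) < d -> Rabs (b' - snd ab) < d -> Rabs (p - p0) < d ->
       Rabs (q - q0) < d -> D p q -> Rabs (g a' b' p q - g (fst ab) (snd ab) p0 q0) < eps / 2))
  as [del Hdel].
{ intros [a b]. exact (Hc a b). }
destruct (compactness_value_2d 0 1 0 1 (fun u v => del (u, v))) as [d Hd].
exists d. split. apply cond_pos.
intros a b p q Ha Hb Hp Hq Dpq.
specialize (Hd a b Ha Hb).
apply NNPP. intro Hneg. apply Hd. intros [u [v [Hu [Hv [H1 [H2 H3]]]]]]. apply Hneg.
assert (K := Hdel (u, v) Hu Hv). simpl in K.
assert (E1 : Rabs (g a b p q - g u v p0 q0) < eps / 2) by (apply K; auto; lra).
assert (E2 : Rabs (g a b p0 q0 - g u v p0 q0) < eps / 2).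
{ apply K; auto. rewrite Rminus_diag, Rabs_R0. apply cond_pos. rewrite Rminus_diag, Rabs_R0. apply cond_pos. }
replace (g a b p q - g a b p0 q0) with ((g a b p q - g u v p0 q0) - (g a b p0 q0 - g u v p0 q0)) by ring.
eapply Rle_lt_trans. apply Rabs_triang. rewrite Rabs_Ropp. lra.
Qed.


Lemma per_nat (F : R -> R) : (forall x, F (x + 1) = F x) -> forall n x, F (x + INR n) = F x.
Proof.
intros H n; induction n as [|n IH]; intros x.
- simpl. rewrite Rplus_0_r. reflexivity.
- rewrite S_INR. replace (x + (INR n + 1)) with ((x + INR n) + 1) by ring. rewrite H. apply IH.
Qed.

Lemma per_Z (F : R -> R) : (forall x, F (x + 1) = F x) -> forall k x, F (x + IZR k) = F x.
Proof.
intros H k x. destruct (Z_le_dec 0 k) as [Hk|Hk].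
- rewrite <- (Z2Nat.id k Hk). rewrite <- INR_IZR_INZ. apply per_nat; auto.
- assert (Hk' : (0 <= - k)%Z) by lia.
  set (n := Z.to_nat (-k)).
  assert (E : IZR k = - INR n).
  { unfold n. rewrite INR_IZR_INZ, Z2Nat.id by lia. rewrite opp_IZR. ring. }
  rewrite E. rewrite <- (per_nat F H n (x + - INR n)). f_equal. ring.
Qed.

Lemma per_red (F : R -> R) : (forall x, F (x + 1) = F x) -> forall x, exists x', 0 <= x' <= 1 /\ F x = F x'.
Proof.
intros H x. exists (x - IZR (Int_part x)).
destruct (base_Int_part x) as [B1 B2]. split. lra.
rewrite <- (per_Z F H (Int_part x) (x - IZR (Int_part x))). f_equal. ring.
Qed.

Lemma per3_red (g : R -> R -> R -> R) : periodic3 g ->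
  forall x y t, exists x' y', 0 <= x' <= 1 /\ 0 <= y' <= 1 /\ g x y t = g x' y' t.
Proof.
intros Hp x y t.
destruct (per_red (fun z => g z y t) (fun z => proj1 (Hp z y t)) x) as [x' [Hx Ex]].
destruct (per_red (fun z => g x' z t) (fun z => proj2 (Hp x' z t)) y) as [y' [Hy Ey]].
exists x', y'. split; auto. split; auto. simpl in *. congruence.
Qed.

Lemma dlim_left (F : R -> R) c l d : derivable_pt_lim F c l -> 0 < d ->
  (forall z, c - d < z < c -> F c <= F z) -> l <= 0.
Proof.
intros H Hd Hz. apply Rnot_lt_le. intro Hl.
destruct (H l Hl) as [del Hdel].
set (h := - Rmin (del/2) (d/2)).
assert (Hm1 := Rmin_l (del/2) (d/2)). assert (Hm2 := Rmin_r (del/2) (d/2)).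
assert (Hpos : 0 < Rmin (del/2) (d/2)) by (apply Rmin_pos; [assert (Q := cond_pos del); lra | lra]).
assert (Hh : h <> 0) by (unfold h; lra).
assert (Hh2 : Rabs h < del) by (unfold h; rewrite Rabs_Ropp, Rabs_pos_eq by lra; assert (Q := cond_pos del); lra).
specialize (Hdel h Hh Hh2).
assert (Hq : (F (c + h) - F c) / h <= 0).
{ assert (F c <= F (c + h)) by (apply Hz; unfold h; lra).
  assert (Hi : / h < 0) by (apply Rinv_lt_0_compat; unfold h; lra).
  unfold Rdiv. replace ((F (c + h) - F c) * / h) with (- ((F (c + h) - F c) * (- / h))) by ring.
  assert (0 <= (F (c + h) - F c) * (- / h)) by (apply Rmult_le_pos; lra). lra. }
apply Rabs_def2 in Hdel. lra.
Qed.

Lemma dlim_right (F : R -> R) c l d : derivable_pt_lim F c l -> 0 < d ->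
  (forall z, c < z < c + d -> F c <= F z) -> 0 <= l.
Proof.
intros H Hd Hz. apply Rnot_lt_le. intro Hl.
destruct (H (-l)) as [del Hdel]. lra.
set (h := Rmin (del/2) (d/2)).
assert (Hm1 : h <= del/2) by apply Rmin_l. assert (Hm2 : h <= d/2) by apply Rmin_r.
assert (Hpos : 0 < h) by (apply Rmin_pos; [assert (Q := cond_pos del); lra | lra]).
assert (Hh : h <> 0) by lra.
assert (Hh2 : Rabs h < del) by (rewrite Rabs_pos_eq by lra; assert (Q := cond_pos del); lra).
specialize (Hdel h Hh Hh2).
assert (Hq : 0 <= (F (c + h) - F c) / h).
{ assert (F c <= F (c + h)) by (apply Hz; lra).
  unfold Rdiv. apply Rmult_le_pos. lra. left. apply Rinv_0_lt_compat. lra. }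
apply Rabs_def2 in Hdel. lra.
Qed.

Lemma Derive_min0 (F : R -> R) c : ex_derive F c -> (forall z, F c <= F z) -> Derive F c = 0.
Proof.
intros [l Hl] Hz. rewrite (is_derive_unique _ _ _ Hl).
apply is_derive_Reals in Hl.
apply Rle_antisym.
- apply (dlim_left F c l 1 Hl Rlt_0_1). intros; auto.
- apply (dlim_right F c l 1 Hl Rlt_0_1). intros; auto.
Qed.

Lemma Derive_left_le0 (F : R -> R) c d : ex_derive F c -> 0 < d ->
  (forall z, c - d < z < c -> F c <= F z) -> Derive F c <= 0.
Proof.
intros [l Hl] Hd Hz. rewrite (is_derive_unique _ _ _ Hl).
apply is_derive_Reals in Hl. eapply dlim_left; eauto.
Qed.


Lemma touch (w : R -> R -> R -> R) (T1 : R) : 0 < T1 -> periodic3 w ->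
  (forall x y t, 0 <= t <= T1 -> ctd (fun s => 0 <= s <= T1) w x y t) ->
  (forall x y, 0 < w x y 0) ->
  (forall x y t, 0 < t < T1 -> w x y t = 0 -> (forall x' y', 0 <= w x' y' t) ->
     (forall s x' y', 0 <= s < t -> 0 < w x' y' s) -> False) ->
  forall x y t, 0 <= t < T1 -> 0 < w x y t.
Proof.
intros HT1 Hper Hc H0 Hhyp x y t0 Ht0.
apply NNPP; intro Hn. apply Rnot_lt_le in Hn.
set (P := fun s => 0 <= s <= t0 /\ forall r x' y', 0 <= r <= s -> 0 < w x' y' r).
assert (HP0 : P 0).
{ split. lra. intros r x' y' Hr. replace r with 0 by lra. apply H0. }
assert (Hb : bound P). { exists t0. intros s [Hs _]. lra. }
destruct (completeness P Hb (ex_intro _ 0 HP0)) as [ts [Hub Hlub]].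
assert (Hts0 : 0 <= ts) by (apply Hub; exact HP0).
assert (Hts1 : ts <= t0) by (apply Hlub; intros s [Hs _]; lra).
assert (Ha : forall r x' y', 0 <= r < ts -> 0 < w x' y' r).
{ intros r x' y' Hr. apply NNPP; intro Hneg.
  assert (ts <= r).
  { apply Hlub. intros s [Hs Hs']. apply Rnot_lt_le. intro Hsr.
    apply Hneg. apply Hs'. lra. }
  lra. }
assert (Hc1 : exists xs ys, w xs ys ts <= 0).
{ apply NNPP; intro Hneg.
  assert (Hpos : forall a b, 0 < w a b ts).
  { intros a b. apply Rnot_le_lt. intro. apply Hneg. exists a, b; auto. }
  assert (Hch : forall ab : R * R, exists d : posreal, forall a b p,
      Rabs (a - fst ab) < d -> Rabs (b - snd ab) < d -> Rabs (p - ts) < d -> 0 <= p <= T1 ->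
      0 < w a b p).
  { intros [u v]. simpl.
    destruct (Hc u v ts) with (eps := w u v ts / 2) as [d [Hd K]]. lra.
    specialize (Hpos u v). lra.
    exists (mkposreal d Hd). simpl. intros a b p H1 H2 H3 H4.
    specialize (K a b p H1 H2 H3 H4). specialize (Hpos u v). apply Rabs_def2 in K. lra. }
  destruct (choice _ Hch) as [del Hdel].
  destruct (compactness_value_2d 0 1 0 1 (fun u v => del (u, v))) as [d Hd].
  assert (Hnear : forall a b p, Rabs (p - ts) < d -> 0 <= p <= T1 -> 0 < w a b p).
  { intros a b p Hp Hp2.
    destruct (per3_red w Hper a b p) as [a' [b' [Ha' [Hb' E]]]]. rewrite E.
    specialize (Hd a' b' Ha' Hb').
    apply NNPP. intro Hneg2. apply Hd. intros [u [v [Hu [Hv [H1 [H2 H3]]]]]]. apply Hneg2.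
    apply (Hdel (u, v)); simpl; auto. lra. }
  destruct (Req_dec ts t0) as [Heq|Hne].
  - assert (0 < w x y t0).
    { apply Hnear. rewrite Heq, Rminus_diag, Rabs_R0. apply cond_pos. lra. }
    lra.
  - set (s' := Rmin (ts + d / 2) t0).
    assert (Hs1 : s' <= ts + d/2) by apply Rmin_l.
    assert (Hs2 : s' <= t0) by apply Rmin_r.
    assert (Hs3 : ts < s').
    { unfold s'. apply Rmin_glb_lt. assert (Q := cond_pos d). lra. lra. }
    assert (HPs : P s').
    { split. lra. intros r x' y' Hr.
      destruct (Rlt_le_dec r ts) as [Hrt|Hrt].
      - apply Ha. lra.
      - apply Hnear. rewrite Rabs_pos_eq by lra. assert (Q := cond_pos d). lra. lra. }
    assert (s' <= ts) by (apply Hub; exact HPs). lra. }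
destruct Hc1 as [xs [ys Hxs]].
assert (Htsp : 0 < ts).
{ destruct Hts0 as [Hl|He]. exact Hl. rewrite <- He in Hxs. specialize (H0 xs ys). lra. }
assert (Hd : forall x' y', 0 <= w x' y' ts).
{ intros x' y'. apply Rnot_lt_le. intro Hneg.
  destruct (Hc x' y' ts) with (eps := - w x' y' ts / 2) as [d [Hd K]]. lra. lra.
  set (r := ts - Rmin d ts / 2).
  assert (Hm1 : Rmin d ts <= d) by apply Rmin_l.
  assert (Hm2 : Rmin d ts <= ts) by apply Rmin_r.
  assert (Hm3 : 0 < Rmin d ts) by (apply Rmin_pos; lra).
  assert (Kr : Rabs (w x' y' r - w x' y' ts) < - w x' y' ts / 2).
  { apply K. rewrite Rminus_diag, Rabs_R0; lra. rewrite Rminus_diag, Rabs_R0; lra.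
    unfold r. rewrite Rabs_left by lra. lra. unfold r; lra. }
  assert (0 < w x' y' r) by (apply Ha; unfold r; lra).
  apply Rabs_def2 in Kr. lra. }
assert (Hz : w xs ys ts = 0) by (specialize (Hd xs ys); lra).
apply (Hhyp xs ys ts); auto.
lra.
Qed.


Lemma cont_ed (phi : R -> R) t : continuous phi t ->
  forall eps, 0 < eps -> exists d, 0 < d /\ forall t', Rabs (t' - t) < d -> Rabs (phi t' - phi t) < eps.
Proof.
intros H eps He.
destruct (H (ball (phi t) (mkposreal _ He))) as [d Hd]. apply locally_ball.
exists d. split. apply cond_pos. intros t' H1. assert (K := Hd t'). 
assert (HB : ball t d t') by (apply ball_R_iff; exact H1).
specialize (K HB). apply ball_R_iff in K. exact K.
Qed.

Lemma ed_cont (phi : R -> R) t :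
  (forall eps, 0 < eps -> exists d, 0 < d /\ forall t', Rabs (t' - t) < d -> Rabs (phi t' - phi t) < eps) ->
  continuous phi t.
Proof.
intros H. intros P [e He]. destruct (H e (cond_pos e)) as [d [Hd K]].
exists (mkposreal d Hd). intros t' Ht'. apply He. apply ball_R_iff. apply K. apply ball_R_iff in Ht'. exact Ht'.
Qed.

Lemma reg_ctd T g x y t : classical_reg T g -> 0 <= t <= T -> ctd (fun s => 0 <= s <= T) g x y t.
Proof. intros [H _] Ht. apply ctd_of_filt. apply H. exact Ht. Qed.

Lemma reg_ctd_pd T g d x y t : classical_reg T g -> 0 < t < T -> ctd (fun s => 0 < s < T) (pd d g) x y t.
Proof. intros [_ [_ H]] Ht. apply ctd_of_filt. apply H. exact Ht. Qed.

Lemma mp (T T1 s : R) (g : R -> R -> R -> R) (phi dphi : R -> R) :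
  0 < T1 <= T -> classical_reg T g -> periodic3 g -> (s = 1 \/ s = -1) ->
  (forall t, is_derive phi t (dphi t)) ->
  (forall x y, 0 < s * g x y 0 + phi 0) ->
  (forall x y t, 0 < t < T1 -> s * g x y t + phi t = 0 -> dx g x y t = 0 -> dy g x y t = 0 ->
      0 < s * dt g x y t + dphi t) ->
  forall x y t, 0 <= t <= T1 -> 0 <= s * g x y t + phi t.
Proof.
intros HT Hreg Hper Hs Hphi H0 Hhyp.
set (w := fun x y t => s * g x y t + phi t).
assert (Hs0 : s <> 0) by (destruct Hs; lra).
assert (Hwc : forall x y t, 0 <= t <= T1 -> ctd (fun s => 0 <= s <= T1) w x y t).
{ intros x y t Ht. unfold w. apply ctd_plus.
  - apply ctd_mult. apply ctd_const_t. intros eps He; exists 1; split; [lra|]. intros; rewrite Rminus_diag, Rabs_R0; lra.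
    apply ctd_mono with (fun s => 0 <= s <= T). intros; lra. apply reg_ctd; auto. lra.
  - apply ctd_const_t. apply cont_ed. eapply (@ex_derive_continuous R_AbsRing R_NormedModule phi t). exists (dphi t). apply Hphi. }
assert (Hwp : periodic3 w).
{ intros x y t. unfold w. destruct (Hper x y t) as [E1 E2]. rewrite E1, E2. auto. }
assert (Hstrict : forall x y t, 0 <= t < T1 -> 0 < w x y t).
{ apply touch; auto. lra.
  intros x y t Ht Hw0 Hmin Hleft.
  assert (Hex : forall dd, ex_pd dd g x y t) by (intros dd; apply Hreg; lra).
  assert (Hdx : dx g x y t = 0).
  { assert (Hd1 : is_derive (fun z => s * g z y t + phi t) x (s * dx g x y t + 0)).
    { apply isd_plus. apply isd_scal. apply Derive_correct. apply (Hex Defs.Dx).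
      apply isd_const. }
    assert (Hd2 : Derive (fun z => s * g z y t + phi t) x = 0).
    { apply Derive_min0. eexists; exact Hd1. intros z. change (w x y t <= w z y t). rewrite Hw0. apply Hmin. }
    assert (Hz0 : s * dx g x y t + 0 = 0) by (rewrite <- (is_derive_unique _ _ _ Hd1); exact Hd2).
    rewrite Rplus_0_r in Hz0.
    apply Rmult_integral in Hz0 as [Hz|Hz]. contradiction. exact Hz. }
  assert (Hdy : dy g x y t = 0).
  { assert (Hd1 : is_derive (fun z => s * g x z t + phi t) y (s * dy g x y t + 0)).
    { apply isd_plus. apply isd_scal. apply Derive_correct. apply (Hex Defs.Dy).
      apply isd_const. }
    assert (Hd2 : Derive (fun z => s * g x z t + phi t) y = 0).
    { apply Derive_min0. eexists; exact Hd1. intros z. change (w x y t <= w x z t). rewrite Hw0. apply Hmin. }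
    assert (Hz0 : s * dy g x y t + 0 = 0) by (rewrite <- (is_derive_unique _ _ _ Hd1); exact Hd2).
    rewrite Rplus_0_r in Hz0.
    apply Rmult_integral in Hz0 as [Hz|Hz]. contradiction. exact Hz. }
  assert (Hd1 : is_derive (fun z => s * g x y z + phi z) t (s * dt g x y t + dphi t)).
  { apply isd_plus. apply isd_scal. apply Derive_correct. apply (Hex Defs.Dt). apply Hphi. }
  assert (Hd2 : Derive (fun z => s * g x y z + phi z) t <= 0).
  { apply Derive_left_le0 with t. eexists; exact Hd1. lra.
    intros z Hz. change (w x y t <= w x y z). rewrite Hw0. left. apply Hleft. lra. }
  assert (Hz0 : s * dt g x y t + dphi t <= 0) by (rewrite <- (is_derive_unique _ _ _ Hd1); exact Hd2).
  specialize (Hhyp x y t Ht Hw0 Hdx Hdy). lra. }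
intros x y t Ht. destruct (Rlt_le_dec t T1) as [Hlt|Hge].
- left. apply (Hstrict x y t). lra.
- assert (Heq : t = T1) by lra. subst t. change (0 <= w x y T1).
  apply Rnot_lt_le. intro Hneg.
  destruct (Hwc x y T1) with (eps := - w x y T1 / 2) as [d [Hd K]]. lra. lra.
  set (r := T1 - Rmin d T1 / 2).
  assert (Hm1 : Rmin d T1 <= d) by apply Rmin_l.
  assert (Hm2 : Rmin d T1 <= T1) by apply Rmin_r.
  assert (Hm3 : 0 < Rmin d T1) by (apply Rmin_pos; lra).
  assert (Kr : Rabs (w x y r - w x y T1) < - w x y T1 / 2).
  { apply K. rewrite Rminus_diag, Rabs_R0; lra. rewrite Rminus_diag, Rabs_R0; lra.
    unfold r. rewrite Rabs_left by lra. lra. unfold r; lra. }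
  assert (0 < w x y r) by (apply Hstrict; unfold r; lra).
  apply Rabs_def2 in Kr. lra.
Qed.


Lemma ctd_abs D g x y t : ctd D g x y t -> ctd D (fun a b c => Rabs (g a b c)) x y t.
Proof.
intros H eps He. destruct (H eps He) as [d [Hd K]]. exists d; split; auto.
intros. eapply Rle_lt_trans. apply Rabs_triang_inv2. auto.
Qed.

Lemma ed_contpt (phi : R -> R) t :
  (forall eps, 0 < eps -> exists d, 0 < d /\ forall t', Rabs (t' - t) < d -> Rabs (phi t' - phi t) < eps) ->
  continuity_pt phi t.
Proof. intros H. apply continuity_pt_filterlim. apply (ed_cont phi t H). Qed.

Lemma bounded2 (g : R -> R -> R -> R) t :
  (forall x y, ctd (fun _ => True) g x y t) ->
  exists B, forall x y, 0 <= x <= 1 -> 0 <= y <= 1 -> g x y t <= B.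
Proof.
intros Hc.
assert (Hy : forall x, exists y, (forall c, 0 <= c <= 1 -> g x c t <= g x y t) /\ 0 <= y <= 1).
{ intros x. apply continuity_ab_maj. lra. intros c _. apply ed_contpt.
  intros eps He. destruct (Hc x c eps He) as [d [Hd K]]. exists d; split; auto.
  intros t' H'. apply K; auto; rewrite Rminus_diag, Rabs_R0; lra. }
destruct (choice _ Hy) as [Y HY].
set (m := fun x => g x (Y x) t).
assert (Hm : forall c, continuity_pt m c).
{ intros c. apply ed_contpt. intros eps He.
  destruct (tube (fun a b p q => g p b t) (fun _ _ => True) c 0 I) with (eps := eps/2) as [d [Hd K]].
  { intros a b Ha Hb e He'. destruct (Hc c b e He') as [d [Hd K]]. exists d; split; auto.
    intros a' b' p q H1 H2 H3 H4 _. apply K; auto. rewrite Rminus_diag, Rabs_R0; lra. }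
  lra.
  exists d; split; auto. intros t' Ht'.
  assert (K1 := K 0 (Y t') t' 0). assert (K2 := K 0 (Y c) t' 0).
  destruct (HY t') as [HY1 HY2]. destruct (HY c) as [HY3 HY4].
  assert (E1 : Rabs (g t' (Y t') t - g c (Y t') t) < eps/2) by (apply K1; auto; try lra; rewrite Rminus_diag, Rabs_R0; lra).
  assert (E2 : Rabs (g t' (Y c) t - g c (Y c) t) < eps/2) by (apply K2; auto; try lra; rewrite Rminus_diag, Rabs_R0; lra).
  assert (F1 := HY1 (Y c) HY4). assert (F2 := HY3 (Y t') HY2).
  unfold m. apply Rabs_def2 in E1. apply Rabs_def2 in E2. apply Rabs_def1; lra. }
destruct (continuity_ab_maj m 0 1) as [X [HX1 HX2]]. lra. intros; apply Hm.
exists (m X). intros x y Hx Hy'. destruct (HY x) as [HY1 HY2].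
specialize (HX1 x Hx). unfold m in *. specialize (HY1 y Hy'). lra.
Qed.

Lemma Linf_prop (G : R -> R -> R) :
  (exists B, forall x y, 0 <= x <= 1 -> 0 <= y <= 1 -> Rabs (G x y) <= B) ->
  (forall x y, 0 <= x <= 1 -> 0 <= y <= 1 -> Rabs (G x y) <= LinfOmega G) /\
  (forall B, (forall x y, 0 <= x <= 1 -> 0 <= y <= 1 -> Rabs (G x y) <= B) -> LinfOmega G <= B).
Proof.
intros [B HB]. unfold LinfOmega.
set (E := fun r => exists x y, 0 <= x <= 1 /\ 0 <= y <= 1 /\ r = Rabs (G x y)).
destruct (Lub_Rbar_correct E) as [Hub Hlub].
assert (HE0 : E (Rabs (G 0 0))) by (exists 0, 0; repeat split; lra).
assert (Hfin : exists l, Lub_Rbar E = Finite l).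
{ assert (H1 := Hub _ HE0). assert (H2 : Rbar_le (Lub_Rbar E) (Finite B)).
  { apply Hlub. intros r [x [y [Hx [Hy Er]]]]. subst r. simpl. apply HB; auto. }
  destruct (Lub_Rbar E) as [l| |]; simpl in *; try tauto. exists l; auto. }
destruct Hfin as [l Hl]. rewrite Hl. simpl. split.
- intros x y Hx Hy. assert (H1 : E (Rabs (G x y))) by (exists x, y; auto).
  specialize (Hub _ H1). rewrite Hl in Hub. exact Hub.
- intros B' HB'. assert (H2 : Rbar_le (Lub_Rbar E) (Finite B')).
  { apply Hlub. intros r [x [y [Hx [Hy Er]]]]. subst r. simpl. apply HB'; auto. }
  rewrite Hl in H2. exact H2.
Qed.

Lemma Derive_per (F : R -> R) x : (forall z, F (z + 1) = F z) -> ex_derive F x ->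
  Derive F (x + 1) = Derive F x.
Proof.
intros Hp [l Hl]. rewrite (is_derive_unique _ _ _ Hl). apply is_derive_unique.
assert (H1 : is_derive (fun z => F (z - 1)) (x + 1) (scal 1 l)).
{ assert (Hg : is_derive (fun z : R => z - 1) (x+1) 1) by (auto_derive; auto; ring).
  apply (is_derive_comp F (fun z => z - 1) (x+1) l 1).
  assert (Ex : x + 1 - 1 = x) by ring. simpl. rewrite Ex. exact Hl. exact Hg. }
assert (E1 : scal (1:R) l = l) by (unfold scal; simpl; unfold mult; simpl; apply Rmult_1_l).
rewrite E1 in H1. eapply is_derive_ext; [|exact H1]. intros z. simpl.
rewrite <- (Hp (z - 1)). f_equal. ring.
Qed.

Section Udiv.
Variables (u1 u2 : R -> R -> R -> R).
Hypotheses (Hu1 : smooth3 u1) (Hu2 : smooth3 u2) (Hp1 : periodic3 u1) (Hp2 : periodic3 u2).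

Lemma u_ex d (u : R -> R -> R -> R) x y t : smooth3 u -> ex_pd d u x y t.
Proof. intros H. exact (proj2 (H nil) d x y t). Qed.

Lemma u_ctd (u : R -> R -> R -> R) x y t : smooth3 u -> ctd (fun _ => True) u x y t.
Proof. intros H. apply ctd_of_cont. exact (proj1 (H nil) (x, y, t)). Qed.

Lemma ux_ctd (u : R -> R -> R -> R) x y t : smooth3 u -> ctd (fun _ => True) (dx u) x y t.
Proof. intros H. apply ctd_of_cont. exact (proj1 (H (cons Defs.Dx nil)) (x, y, t)). Qed.

Lemma uy_ctd (u : R -> R -> R -> R) x y t : smooth3 u -> ctd (fun _ => True) (dy u) x y t.
Proof. intros H. apply ctd_of_cont. exact (proj1 (H (cons Defs.Dy nil)) (x, y, t)). Qed.

Lemma divu_ctd x y t : ctd (fun _ => True) (divu u1 u2) x y t.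
Proof. unfold divu. apply ctd_plus. apply ux_ctd; auto. apply uy_ctd; auto. Qed.

Lemma divu_per : periodic3 (divu u1 u2).
Proof.
intros x y t. unfold divu, dx, dy. split.
- rewrite (Derive_per (fun z => u1 z y t)). f_equal. apply Derive_ext. intros z. apply Hp2.
  intros z; apply Hp1. apply (u_ex Defs.Dx u1 x y t Hu1).
- rewrite (Derive_per (fun z => u2 x z t)). f_equal. apply Derive_ext. intros z. apply Hp1.
  intros z; apply Hp2. apply (u_ex Defs.Dy u2 x y t Hu2).
Qed.

Definition Lt (t : R) := LinfOmega (fun x y => divu u1 u2 x y t).

Lemma divu_bnd t : exists B, forall x y, 0 <= x <= 1 -> 0 <= y <= 1 -> Rabs (divu u1 u2 x y t) <= B.
Proof.
apply (bounded2 (fun a b c => Rabs (divu u1 u2 a b c))). intros. apply ctd_abs. apply divu_ctd.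
Qed.

Lemma Lt_ge x y t : Rabs (divu u1 u2 x y t) <= Lt t.
Proof.
destruct (per3_red _ divu_per x y t) as [x' [y' [Hx [Hy E]]]]. rewrite E.
apply (proj1 (Linf_prop _ (divu_bnd t))); auto.
Qed.

Lemma Lt_pos t : 0 <= Lt t.
Proof. eapply Rle_trans; [apply Rabs_pos|apply (Lt_ge 0 0 t)]. Qed.

Lemma Lt_cont t0 : continuous Lt t0.
Proof.
apply ed_cont. intros eps He.
destruct (tube (fun a b p q => divu u1 u2 a b p) (fun _ _ => True) t0 0 I) with (eps := eps/2) as [d [Hd K]].
{ intros a b Ha Hb e He'. destruct (divu_ctd a b t0 e He') as [d [Hd K]]. exists d; split; auto. }
lra.
exists d; split; auto. intros t' Ht'.
assert (A1 : Lt t' <= Lt t0 + eps/2).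
{ apply (proj2 (Linf_prop _ (divu_bnd t'))). intros x y Hx Hy.
  assert (K1 : Rabs (divu u1 u2 x y t' - divu u1 u2 x y t0) < eps/2) by (apply (K x y t' 0); auto; rewrite Rminus_diag, Rabs_R0; lra).
  assert (F := Lt_ge x y t0). assert (G := Rabs_triang_inv (divu u1 u2 x y t') (divu u1 u2 x y t0)). lra. }
assert (A2 : Lt t0 <= Lt t' + eps/2).
{ apply (proj2 (Linf_prop _ (divu_bnd t0))). intros x y Hx Hy.
  assert (K1 : Rabs (divu u1 u2 x y t' - divu u1 u2 x y t0) < eps/2) by (apply (K x y t' 0); auto; rewrite Rminus_diag, Rabs_R0; lra).
  assert (F := Lt_ge x y t'). assert (G := Rabs_triang_inv (divu u1 u2 x y t0) (divu u1 u2 x y t')).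
  rewrite Rabs_minus_sym in G. lra. }
apply Rabs_def1; lra.
Qed.

End Udiv.


Section Ebar.
Variables (u1 u2 : R -> R -> R -> R).
Hypotheses (Hu1 : smooth3 u1) (Hu2 : smooth3 u2) (Hp1 : periodic3 u1) (Hp2 : periodic3 u2).

Definition Et (t : R) := exp (RInt (Lt u1 u2) 0 t).

Lemma Lt_exRInt a b : ex_RInt (Lt u1 u2) a b.
Proof. apply (@ex_RInt_continuous R_CompleteNormedModule). intros; apply Lt_cont; auto. Qed.

Lemma Et_der t : is_derive Et t (Lt u1 u2 t * Et t).
Proof.
assert (H1 : is_derive (fun s => RInt (Lt u1 u2) 0 s) t (Lt u1 u2 t)).
{ apply (is_derive_RInt (Lt u1 u2) (fun s => RInt (Lt u1 u2) 0 s) 0 t).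
  exists (mkposreal 1 Rlt_0_1). intros b _. apply (@RInt_correct R_CompleteNormedModule). apply Lt_exRInt.
  apply Lt_cont; auto. }
assert (H2 : is_derive exp (RInt (Lt u1 u2) 0 t) (exp (RInt (Lt u1 u2) 0 t))) by (auto_derive; auto; ring).
assert (H3 := is_derive_comp exp (fun s => RInt (Lt u1 u2) 0 s) t _ _ H2 H1).
unfold Et. simpl in H3. unfold scal in H3; simpl in H3; unfold mult in H3; simpl in H3. exact H3.
Qed.

Lemma Et_pos t : 0 < Et t.
Proof. apply exp_pos. Qed.

Lemma Et_0 : Et 0 = 1.
Proof. unfold Et. rewrite RInt_point. apply exp_0. Qed.

Lemma Et_mono s t : s <= t -> Et s <= Et t.
Proof.
intros Hst. unfold Et.
assert (E := RInt_Chasles (Lt u1 u2) 0 s t (Lt_exRInt 0 s) (Lt_exRInt s t)).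
simpl in E. unfold plus in E; simpl in E.
assert (P : 0 <= RInt (Lt u1 u2) s t).
{ apply RInt_ge_0; auto. apply Lt_exRInt. intros; apply Lt_pos; auto. }
destruct (Req_dec (RInt (Lt u1 u2) 0 s) (RInt (Lt u1 u2) 0 t)) as [Heq|Hne].
- rewrite Heq; lra.
- left. apply exp_increasing. lra.
Qed.

Lemma Et_ge1 t : 0 <= t -> 1 <= Et t.
Proof. intros Ht. rewrite <- Et_0. apply Et_mono; auto. Qed.
End Ebar.


Lemma pos_ge0 p : 0 <= Defs.pos p.
Proof. unfold Defs.pos. apply Rmax_r. Qed.
Lemma pos_neg p : p <= 0 -> Defs.pos p = 0.
Proof. intros; unfold Defs.pos; apply Rmax_right; auto. Qed.
Lemma pos_pos p : 0 <= p -> Defs.pos p = p.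
Proof. intros; unfold Defs.pos; apply Rmax_left; auto. Qed.

Lemma frac01 a b : 0 <= a -> 0 < b -> 0 <= a / (a + b) <= 1.
Proof.
intros Ha Hb. split.
- apply Rdiv_le_0_compat; lra.
- apply Rmult_le_reg_r with (a + b). lra. unfold Rdiv. rewrite Rmult_assoc, Rinv_l by lra. lra.
Qed.

Lemma chi_h_01 nu h : 0 < nu -> 0 <= chi_h nu h <= 1.
Proof. intros. unfold chi_h. apply frac01. apply pos_ge0. auto. Qed.

Lemma chi_h_0 nu h : 0 < nu -> h <= 0 -> chi_h nu h = 0.
Proof. intros. unfold chi_h. rewrite pos_neg by auto. unfold Rdiv. ring. Qed.

Lemma S_h_0 f om nu h A : 0 < nu -> h <= 0 -> S_h f om nu h A = 0.
Proof. intros. unfold S_h. rewrite chi_h_0 by auto. ring. Qed.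

Lemma S_h_bnd f fl fu om nu h A : 0 < nu -> (forall z, fl <= f z <= fu) -> 0 <= A <= 1 ->
  Rabs (S_h f om nu h A) <= Rabs fu + Rabs fl.
Proof.
intros Hnu Hf HA. unfold S_h.
set (K := Rabs fu + Rabs fl).
assert (Hb : forall z, Rabs (f z) <= K).
{ intros z. destruct (Hf z). unfold K. apply Rabs_le. split.
  - assert (Q := Rabs_pos fu). assert (Q2 := Rle_abs (-fl)). rewrite Rabs_Ropp in Q2. lra.
  - assert (Q := Rabs_pos fl). assert (Q2 := Rle_abs fu). lra. }
set (z := Defs.pos h / (Defs.pos A + om)).
assert (H1 : Rabs (f z * A + (1 - A) * f 0) <= K).
{ eapply Rle_trans. apply Rabs_triang. rewrite !Rabs_mult.
  rewrite (Rabs_pos_eq A), (Rabs_pos_eq (1 - A)) by lra.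
  assert (B1 := Hb z). assert (B2 := Hb 0).
  assert (Rabs (f z) * A <= K * A) by (apply Rmult_le_compat_r; lra).
  assert ((1 - A) * Rabs (f 0) <= (1 - A) * K) by (apply Rmult_le_compat_l; lra). nra. }
rewrite Rabs_mult. destruct (chi_h_01 nu h Hnu) as [C1 C2].
rewrite (Rabs_pos_eq (chi_h nu h)) by lra.
assert (K0 : 0 <= K) by (unfold K; assert (Q := Rabs_pos fu); assert (Q2 := Rabs_pos fl); lra).
assert (Q := Rabs_pos (f z * A + (1 - A) * f 0)). nra.
Qed.

Lemma sqrt_gt_S S om : 0 < om -> S < sqrt (S ^ 2 + om ^ 2).
Proof.
intros Hom. assert (Hp := sqrt_pos (S ^ 2 + om ^ 2)).
destruct (Rlt_le_dec S 0) as [Hs|Hs]. lra.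
apply Rnot_le_lt. intro Hle.
assert (E := sqrt_sqrt (S ^ 2 + om ^ 2)).
assert (0 <= S ^ 2 + om ^ 2) by nra.
specialize (E H).
assert (sqrt (S ^ 2 + om ^ 2) * sqrt (S ^ 2 + om ^ 2) <= S * S) by (apply Rmult_le_compat; lra).
nra.
Qed.

Lemma S_A_nonneg f h0 om nu h A : 0 < om -> 0 < nu -> 0 < h0 -> A <= 0 -> 0 <= S_A f h0 om nu h A.
Proof.
intros Hom Hnu Hh0 HA. unfold S_A.
set (Sv := S_h f om nu h A).
assert (Hq := sqrt_gt_S Sv om Hom).
assert (P1 : 0 <= Defs.pos (f 0) / (h0 + nu) * (1 - A)).
{ apply Rmult_le_pos. apply Rdiv_le_0_compat. apply pos_ge0. lra. lra. }
assert (P2 : 0 <= - A / (2 * Defs.pos h + nu)).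
{ apply Rdiv_le_0_compat. lra. assert (Q := pos_ge0 h). lra. }
assert (P3 : 0 <= (sqrt (Sv ^ 2 + om ^ 2) - Sv) / 2) by lra.
assert (E : A / (2 * Defs.pos h + nu) = - (- A / (2 * Defs.pos h + nu))) by (unfold Rdiv; ring).
rewrite E. assert (0 <= - A / (2 * Defs.pos h + nu) * ((sqrt (Sv ^ 2 + om ^ 2) - Sv) / 2)) by (apply Rmult_le_pos; auto).
lra.
Qed.

Lemma S_A_neg f h0 om nu h A : 0 < om -> 0 < nu -> 0 < h0 -> 1 < A -> S_A f h0 om nu h A < 0.
Proof.
intros Hom Hnu Hh0 HA. unfold S_A.
set (Sv := S_h f om nu h A).
assert (Hq := sqrt_gt_S Sv om Hom).
assert (P1 : Defs.pos (f 0) / (h0 + nu) * (1 - A) <= 0).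
{ assert (0 <= Defs.pos (f 0) / (h0 + nu)) by (apply Rdiv_le_0_compat; [apply pos_ge0|lra]). nra. }
assert (P2 : 0 < A / (2 * Defs.pos h + nu)).
{ apply Rdiv_lt_0_compat. lra. assert (Q := pos_ge0 h). lra. }
assert (P3 : 0 < (sqrt (Sv ^ 2 + om ^ 2) - Sv) / 2) by lra.
assert (0 < A / (2 * Defs.pos h + nu) * ((sqrt (Sv ^ 2 + om ^ 2) - Sv) / 2)) by (apply Rmult_lt_0_compat; auto).
lra.
Qed.

Lemma chi_A_1 om A : 0 < om -> 1 <= A -> chi_A om A = 1.
Proof. intros. unfold chi_A. rewrite pos_neg by lra. unfold Rdiv. ring. Qed.

Lemma chi_A_01 om A : 0 < om -> 0 <= 1 - chi_A om A <= 1.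
Proof. intros. unfold chi_A. replace (1 - (1 - Defs.pos (1 - A) / (Defs.pos (1 - A) + om))) with (Defs.pos (1 - A) / (Defs.pos (1 - A) + om)) by ring.
apply frac01. apply pos_ge0. auto. Qed.

Lemma lim0 a c : (forall eps, 0 < eps -> 0 <= a + eps * c) -> 0 <= a.
Proof.
intros H. apply Rnot_lt_le. intro Ha.
set (e := - a / (2 * (Rabs c + 1))).
assert (Hc := Rabs_pos c).
assert (He : 0 < e) by (unfold e; apply Rdiv_lt_0_compat; lra).
specialize (H e He).
assert (E : e * (2 * (Rabs c + 1)) = - a) by (unfold e; field; lra).
assert (e * c <= e * Rabs c) by (apply Rmult_le_compat_l; [lra| apply Rle_abs]).
nra.
Qed.

Lemma divflux_zero (g u1 u2 : R -> R -> R -> R) x y t :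
  ex_derive (fun z => g z y t) x -> ex_derive (fun z => g x z t) y ->
  ex_derive (fun z => u1 z y t) x -> ex_derive (fun z => u2 x z t) y ->
  dx g x y t = 0 -> dy g x y t = 0 ->
  divflux g u1 u2 x y t = g x y t * divu u1 u2 x y t.
Proof.
intros H1 H2 H3 H4 E1 E2. unfold divflux, divu. unfold dx, dy in *.
rewrite (Derive_mult (fun z => g z y t) (fun z => u1 z y t)) by auto.
rewrite (Derive_mult (fun z => g x z t) (fun z => u2 x z t)) by auto.
rewrite E1, E2. ring.
Qed.


Lemma exR_cont (f : R -> R) a b : (forall z, Rmin a b <= z <= Rmax a b -> continuous f z) -> ex_RInt f a b.
Proof. intros H. apply (@ex_RInt_continuous R_CompleteNormedModule). exact H. Qed.

Lemma ex_RInt_minusR (f g : R -> R) a b : ex_RInt f a b -> ex_RInt g a b -> ex_RInt (fun x => f x - g x) a b.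
Proof. intros. apply (@ex_RInt_minus R_NormedModule f g a b); auto. Qed.
Lemma ex_RInt_plusR (f g : R -> R) a b : ex_RInt f a b -> ex_RInt g a b -> ex_RInt (fun x => f x + g x) a b.
Proof. intros. apply (@ex_RInt_plus R_NormedModule f g a b); auto. Qed.
Lemma RInt_minusR (f g : R -> R) a b : ex_RInt f a b -> ex_RInt g a b ->
  RInt (fun x => f x - g x) a b = RInt f a b - RInt g a b.
Proof. intros. apply (@RInt_minus R_CompleteNormedModule f g a b); auto. Qed.
Lemma RInt_plusR (f g : R -> R) a b : ex_RInt f a b -> ex_RInt g a b ->
  RInt (fun x => f x + g x) a b = RInt f a b + RInt g a b.
Proof. intros. apply (@RInt_plus R_CompleteNormedModule f g a b); auto. Qed.
Lemma RInt_extR (f g : R -> R) a b : (forall x, Rmin a b < x < Rmax a b -> f x = g x) -> RInt f a b = RInt g a b.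
Proof. intros. apply (@RInt_ext R_CompleteNormedModule f g a b); auto. Qed.
Lemma ex_RInt_extR (f g : R -> R) a b : (forall x, Rmin a b < x < Rmax a b -> f x = g x) -> ex_RInt f a b -> ex_RInt g a b.
Proof. intros. apply (@ex_RInt_ext R_NormedModule f g a b); auto. Qed.

Lemma R01min : Rmin 0 1 = 0. Proof. apply Rmin_left; lra. Qed.
Lemma R01max : Rmax 0 1 = 1. Proof. apply Rmax_right; lra. Qed.

Lemma ctd_slice_y D g x y t : ctd D g x y t -> D t -> continuous (fun z => g x z t) y.
Proof.
intros H Dt. apply ed_cont. intros eps He. destruct (H eps He) as [d [Hd K]]. exists d; split; auto.
intros y' Hy. apply K; auto; rewrite Rminus_diag, Rabs_R0; lra.
Qed.

Lemma ctd_slice_x D g x y t : ctd D g x y t -> D t -> continuous (fun z => g z y t) x.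
Proof.
intros H Dt. apply ed_cont. intros eps He. destruct (H eps He) as [d [Hd K]]. exists d; split; auto.
intros x' Hx. apply K; auto; rewrite Rminus_diag, Rabs_R0; lra.
Qed.

Lemma ctd_2d_ty g x y t : ctd (fun _ => True) g x y t -> continuity_2d_pt (fun u v => g x v u) t y.
Proof.
intros H eps. destruct (H eps (cond_pos eps)) as [d [Hd K]]. exists (mkposreal d Hd).
intros u v Hu Hv. simpl in *. apply K; auto. rewrite Rminus_diag, Rabs_R0; lra.
Qed.

Lemma ctd_2d_xy D g x y t : ctd D g x y t -> D t -> continuity_2d_pt (fun u v => g u v t) x y.
Proof.
intros H Dt eps. destruct (H eps (cond_pos eps)) as [d [Hd K]]. exists (mkposreal d Hd).
intros u v Hu Hv. simpl in *. apply K; auto. rewrite Rminus_diag, Rabs_R0; lra.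
Qed.

Lemma exRInt_y D g x t : (forall y, ctd D g x y t) -> D t -> ex_RInt (fun y => g x y t) 0 1.
Proof. intros H Dt. apply exR_cont. intros z _. apply (ctd_slice_y D); auto. Qed.

Lemma RInt_cont2 (g : R -> R -> R -> R) (D : R -> Prop) x0 t0 :
  D t0 -> (forall x y t, D t -> ctd D g x y t) ->
  forall eps, 0 < eps -> exists d, 0 < d /\ forall x t, Rabs (x - x0) < d -> Rabs (t - t0) < d -> D t ->
    Rabs (RInt (fun y => g x y t) 0 1 - RInt (fun y => g x0 y t0) 0 1) < eps.
Proof.
intros Dt0 Hc eps He.
destruct (tube (fun a b p q => g p b q) (fun _ q => D q) x0 t0 Dt0) with (eps := eps/2) as [d [Hd K]].
{ intros a b Ha Hb e He'. destruct (Hc x0 b t0 Dt0 e He') as [d [Hd K]]. exists d; split; auto. }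
lra.
exists d; split; auto. intros x t Hx Ht Dt.
rewrite <- RInt_minusR by (apply exRInt_y with D; auto).
eapply Rle_lt_trans. apply (abs_RInt_le_const _ 0 1 (eps/2)). lra.
apply ex_RInt_minusR; apply exRInt_y with D; auto.
intros y Hy. left. apply (K 0 y x t); auto. lra. lra.
Qed.

Lemma ctd_RInt (g : R -> R -> R -> R) (D : R -> Prop) :
  (forall x y t, D t -> ctd D g x y t) ->
  forall a b t, D t -> ctd D (fun _ b' t' => RInt (fun y => g b' y t') 0 1) a b t.
Proof.
intros Hc a b t Dt eps He.
destruct (RInt_cont2 g D b t Dt Hc eps He) as [d [Hd K]].
exists d; split; auto.
Qed.


Section Main.
Variables (om nu T h0 fl fu hl hu : R) (f : R -> R)
  (u1 u2 h A : R -> R -> R -> R) (hin Ain : R -> R -> R).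
Hypotheses (Hom : 0 < om < 1) (Hnu : 0 < nu < 1) (HT : 0 < T) (Hh0 : 0 < h0)
  (Hf : forall z, fl <= f z <= fu)
  (Hu1 : smooth3 u1) (Hu2 : smooth3 u2) (Hp1 : periodic3 u1) (Hp2 : periodic3 u2)
  (Hph : periodic3 h) (HpA : periodic3 A) (Hrh : classical_reg T h) (HrA : classical_reg T A)
  (Hin_h : forall x y, h x y 0 = hin x y) (Hin_A : forall x y, A x y 0 = Ain x y)
  (Hpde_h : forall x y t, 0 < t < T ->
     dt h x y t + divflux h u1 u2 x y t = S_h f om nu (h x y t) (A x y t))
  (Hpde_A : forall x y t, 0 < t < T ->
     dt A x y t + divflux A u1 u2 x y t =
       S_A f h0 om nu (h x y t) (A x y t)
       + A x y t * divu u1 u2 x y t * chi_A om (A x y t))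
  (Hhl : 0 < hl) (Hhin : forall x y, hl <= hin x y <= hu) (HAin : forall x y, 0 <= Ain x y <= 1).

Let K := Rabs fu + Rabs fl.
Let L := Lt u1 u2.
Let E := Et u1 u2.

Lemma K_ge0 : 0 <= K.
Proof. unfold K. assert (Q := Rabs_pos fu); assert (Q2 := Rabs_pos fl); lra. Qed.

Lemma touch_h x y t : 0 < t < T -> dx h x y t = 0 -> dy h x y t = 0 ->
  dt h x y t = S_h f om nu (h x y t) (A x y t) - h x y t * divu u1 u2 x y t.
Proof.
intros Ht E1 E2. rewrite <- (Hpde_h x y t Ht).
rewrite (divflux_zero h u1 u2 x y t); auto.
- ring.
- apply (proj1 (proj2 Hrh) Defs.Dx); auto.
- apply (proj1 (proj2 Hrh) Defs.Dy); auto.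
- apply (u_ex Defs.Dx u1); auto.
- apply (u_ex Defs.Dy u2); auto.
Qed.

Lemma touch_A x y t : 0 < t < T -> dx A x y t = 0 -> dy A x y t = 0 ->
  dt A x y t = S_A f h0 om nu (h x y t) (A x y t)
       - A x y t * divu u1 u2 x y t * (1 - chi_A om (A x y t)).
Proof.
intros Ht E1 E2. 
assert (Q := Hpde_A x y t Ht).
rewrite (divflux_zero A u1 u2 x y t) in Q; auto.
- lra.
- apply (proj1 (proj2 HrA) Defs.Dx); auto.
- apply (proj1 (proj2 HrA) Defs.Dy); auto.
- apply (u_ex Defs.Dx u1); auto.
- apply (u_ex Defs.Dy u2); auto.
Qed.

Lemma lin_der c t : is_derive (fun s : R => c + s) t 1.
Proof. auto_derive; auto; ring. Qed.

Lemma phi1_der eps t : is_derive (fun s => eps * ((1 + s) * E s)) t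
   (eps * (1 * E t + (1 + t) * (L t * E t))).
Proof. apply isd_scal. apply isd_mult. apply lin_der. apply Et_der; auto. Qed.

Lemma A_nonneg x y t : 0 <= t <= T -> 0 <= A x y t.
Proof.
intros Ht. apply lim0 with ((1 + t) * E t). intros eps He.
assert (M := mp T T 1 A (fun s => eps * ((1 + s) * E s))
   (fun s => eps * (1 * E s + (1 + s) * (L s * E s)))).
replace (A x y t + eps * ((1 + t) * E t)) with (1 * A x y t + eps * ((1 + t) * E t)) by ring.
apply M; auto; try lra.
- intros s; apply phi1_der.
- intros x' y'. rewrite Hin_A. unfold E. rewrite Et_0. specialize (HAin x' y'). lra.
- intros x' y' s Hs Hz E1 E2. rewrite (touch_A x' y' s Hs E1 E2).
  set (a := A x' y' s) in *. set (D := divu u1 u2 x' y' s).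
  set (c := 1 - chi_A om a).
  assert (Hc := chi_A_01 om a (proj1 Hom)). fold c in Hc.
  assert (HE := Et_pos u1 u2 s). fold E in HE.
  assert (HL := Lt_ge u1 u2 Hu1 Hu2 Hp1 Hp2 x' y' s). fold L in HL. fold D in HL.
  assert (HL0 := Lt_pos u1 u2 Hu1 Hu2 Hp1 Hp2 s). fold L in HL0.
  assert (Ha : a = - (eps * ((1 + s) * E s))) by lra.
  assert (Hpos : 0 < eps * ((1 + s) * E s)) by (apply Rmult_lt_0_compat; [lra| apply Rmult_lt_0_compat; lra]).
  assert (HSA : 0 <= S_A f h0 om nu (h x' y' s) a) by (apply S_A_nonneg; lra).
  assert (HDc : - L s <= D * c).
  { destruct (Rle_dec 0 D).
    - assert (0 <= D * c) by (apply Rmult_le_pos; lra). lra.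
    - rewrite Rabs_left in HL by lra. assert (D * c >= D) by nra. lra. }
  assert (HX : (- a) * (D * c) >= (- a) * (- L s)) by (apply Rmult_ge_compat_l; lra).
  assert (0 < eps * E s) by (apply Rmult_lt_0_compat; lra).
  replace (1 * (S_A f h0 om nu (h x' y' s) a - a * D * c) + eps * (1 * E s + (1 + s) * (L s * E s)))
    with (S_A f h0 om nu (h x' y' s) a + (- a) * (D * c) + eps * E s + (eps * ((1 + s) * E s)) * L s) by ring.
  rewrite Ha in HX. nra.
Qed.

Lemma A_le1 x y t : 0 <= t <= T -> A x y t <= 1.
Proof.
intros Ht. cut (0 <= 1 - A x y t). lra. apply lim0 with 1. intros eps He.
assert (M := mp T T (-1) A (fun _ => 1 + eps) (fun _ => 0)).
replace (1 - A x y t + eps * 1) with (-1 * A x y t + (1 + eps)) by ring.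
apply M; auto; try lra.
- intros s; apply (is_derive_const (1 + eps) s).
- intros x' y'. rewrite Hin_A. specialize (HAin x' y'). lra.
- intros x' y' s Hs Hz E1 E2. rewrite (touch_A x' y' s Hs E1 E2).
  assert (Ha : 1 < A x' y' s) by lra.
  rewrite chi_A_1 by lra.
  assert (S_A f h0 om nu (h x' y' s) (A x' y' s) < 0) by (apply S_A_neg; lra).
  lra.
Qed.

Lemma h_nonneg x y t : 0 <= t <= T -> 0 <= h x y t.
Proof.
intros Ht. apply lim0 with ((1 + t) * E t). intros eps He.
assert (M := mp T T 1 h (fun s => eps * ((1 + s) * E s))
   (fun s => eps * (1 * E s + (1 + s) * (L s * E s)))).
replace (h x y t + eps * ((1 + t) * E t)) with (1 * h x y t + eps * ((1 + t) * E t)) by ring.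
apply M; auto; try lra.
- intros s; apply phi1_der.
- intros x' y'. rewrite Hin_h. unfold E. rewrite Et_0. specialize (Hhin x' y'). lra.
- intros x' y' s Hs Hz E1 E2. rewrite (touch_h x' y' s Hs E1 E2).
  set (a := h x' y' s) in *. set (D := divu u1 u2 x' y' s).
  assert (HE := Et_pos u1 u2 s). fold E in HE.
  assert (HL := Lt_ge u1 u2 Hu1 Hu2 Hp1 Hp2 x' y' s). fold L in HL. fold D in HL.
  assert (Ha : a = - (eps * ((1 + s) * E s))) by lra.
  assert (Hpos : 0 < eps * ((1 + s) * E s)) by (apply Rmult_lt_0_compat; [lra| apply Rmult_lt_0_compat; lra]).
  rewrite S_h_0 by lra.
  assert (HD : - L s <= D) by (assert (Q := Rle_abs (- D)); rewrite Rabs_Ropp in Q; lra).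
  assert (HX : (- a) * D >= (- a) * (- L s)) by (apply Rmult_ge_compat_l; lra).
  assert (0 < eps * E s) by (apply Rmult_lt_0_compat; lra).
  replace (1 * (0 - a * D) + eps * (1 * E s + (1 + s) * (L s * E s)))
    with ((- a) * D + eps * E s + (eps * ((1 + s) * E s)) * L s) by ring.
  rewrite Ha in HX. nra.
Qed.

Lemma S_bnd x y t : 0 <= t <= T -> Rabs (S_h f om nu (h x y t) (A x y t)) <= K.
Proof.
intros Ht. apply S_h_bnd; auto. lra. split. apply A_nonneg; auto. apply A_le1; auto.
Qed.

Lemma Ei_der t : is_derive (fun s => / E s) t (- L t * / E t).
Proof.
assert (HE := Et_pos u1 u2 t). fold E in HE.
assert (H := is_derive_inv E t _ (Et_der u1 u2 Hu1 Hu2 Hp1 Hp2 t)).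
assert (H2 := H ltac:(lra)).
replace (- L t * / E t) with (- (Lt u1 u2 t * Et u1 u2 t) / E t ^ 2). exact H2.
unfold L, E in *. field. lra.
Qed.

Lemma lin2_der a b t : is_derive (fun s : R => a * s + b) t a.
Proof. auto_derive; auto; ring. Qed.

Lemma h_lower t1 x y : 0 < t1 <= T -> E t1 <= 2 -> (hl - 2 * K * t1) * / E t1 <= h x y t1.
Proof.
intros Ht1 HE1.
assert (HE2 : forall s, 0 <= s <= t1 -> E s <= 2).
{ intros s Hs. eapply Rle_trans; [apply (Et_mono u1 u2 Hu1 Hu2 Hp1 Hp2); apply Hs|exact HE1]. }
assert (HEp := Et_pos u1 u2 t1). fold E in HEp.
cut (0 <= h x y t1 - (hl - 2 * K * t1) * / E t1). lra.
apply lim0 with ((1 + t1) * / E t1). intros del Hdel.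
assert (M := mp T t1 1 h (fun s => ((2 * K + del) * s + - (hl - del)) * / E s)
   (fun s => (2 * K + del) * / E s + ((2 * K + del) * s + - (hl - del)) * (- L s * / E s))).
replace (h x y t1 - (hl - 2 * K * t1) * / E t1 + del * ((1 + t1) * / E t1))
  with (1 * h x y t1 + ((2 * K + del) * t1 + - (hl - del)) * / E t1) by ring.
apply M; auto; try lra.
- intros s. apply (isd_mult (fun s => (2*K+del)*s + -(hl-del)) (fun s => / E s)). apply lin2_der. apply Ei_der.
- intros x' y'. rewrite Hin_h. unfold E. rewrite Et_0. specialize (Hhin x' y').
  replace ((2 * K + del) * 0 + - (hl - del)) with (- hl + del) by ring. rewrite Rinv_1. lra.
- intros x' y' s Hs Hz E1 E2. rewrite (touch_h x' y' s ltac:(lra) E1 E2).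
  assert (Ha0 : 0 <= h x' y' s) by (apply h_nonneg; lra).
  set (a := h x' y' s) in *. set (D := divu u1 u2 x' y' s).
  assert (HE := Et_pos u1 u2 s). fold E in HE.
  assert (HEs : E s <= 2) by (apply HE2; lra).
  assert (HL := Lt_ge u1 u2 Hu1 Hu2 Hp1 Hp2 x' y' s). fold L in HL. fold D in HL.
  assert (HD : D <= L s) by (assert (Q := Rle_abs D); lra).
  assert (HS := S_bnd x' y' s ltac:(lra)).
  assert (HS2 : - K <= S_h f om nu a (A x' y' s)) by (assert (Q := Rle_abs (- S_h f om nu a (A x' y' s))); rewrite Rabs_Ropp in Q; fold a in HS; lra).
  assert (HaD : a * D <= a * L s) by (apply Rmult_le_compat_l; lra).
  assert (HEi : / 2 <= / E s) by (apply Rinv_le_contravar; lra).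
  assert (HK := K_ge0).
  assert (HP : ((2 * K + del) * s + - (hl - del)) * / E s = - a) by lra.
  assert (HX : (2 * K + del) * / 2 <= (2 * K + del) * / E s) by (apply Rmult_le_compat_l; lra).
  replace (1 * (S_h f om nu a (A x' y' s) - a * D) + ((2 * K + del) * / E s + ((2 * K + del) * s + - (hl - del)) * (- L s * / E s)))
    with (S_h f om nu a (A x' y' s) - a * D + (2 * K + del) * / E s + (- (((2 * K + del) * s + - (hl - del)) * / E s)) * L s) by ring.
  rewrite HP. lra.
Qed.

Lemma h_upper t x y : 0 <= t <= T -> h x y t <= E t * (hu + K * t).
Proof.
intros Ht.
assert (HEp := Et_pos u1 u2 t). fold E in HEp.
cut (0 <= E t * (hu + K * t) - h x y t). lra.
apply lim0 with (E t * (1 + t)). intros del Hdel.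
assert (M := mp T T (-1) h (fun s => E s * ((K + del) * s + (hu + del)))
   (fun s => (L s * E s) * ((K + del) * s + (hu + del)) + E s * (K + del))).
replace (E t * (hu + K * t) - h x y t + del * (E t * (1 + t)))
  with (-1 * h x y t + E t * ((K + del) * t + (hu + del))) by ring.
apply M; auto; try lra.
- intros s. apply (isd_mult E (fun s => (K + del) * s + (hu + del))). apply Et_der; auto. apply lin2_der.
- intros x' y'. rewrite Hin_h. unfold E. rewrite Et_0. specialize (Hhin x' y'). lra.
- intros x' y' s Hs Hz E1 E2. rewrite (touch_h x' y' s ltac:(lra) E1 E2).
  assert (Ha0 : 0 <= h x' y' s) by (apply h_nonneg; lra).
  set (a := h x' y' s) in *. set (D := divu u1 u2 x' y' s).
  assert (HE := Et_ge1 u1 u2 Hu1 Hu2 Hp1 Hp2 s ltac:(lra)). fold E in HE.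
  assert (HL := Lt_ge u1 u2 Hu1 Hu2 Hp1 Hp2 x' y' s). fold L in HL. fold D in HL.
  assert (HD : - L s <= D) by (assert (Q := Rle_abs (- D)); rewrite Rabs_Ropp in Q; lra).
  assert (HS := S_bnd x' y' s ltac:(lra)).
  assert (HS2 : S_h f om nu a (A x' y' s) <= K) by (assert (Q := Rle_abs (S_h f om nu a (A x' y' s))); fold a in HS; lra).
  assert (HaD : a * (- L s) <= a * D) by (apply Rmult_le_compat_l; lra).
  assert (HK := K_ge0).
  assert (HP : E s * ((K + del) * s + (hu + del)) = a) by lra.
  assert (HX : 1 * (K + del) <= E s * (K + del)) by (apply Rmult_le_compat_r; lra).
  replace (-1 * (S_h f om nu a (A x' y' s) - a * D) + (L s * E s * ((K + del) * s + (hu + del)) + E s * (K + del)))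
    with (- S_h f om nu a (A x' y' s) + a * D + L s * (E s * ((K + del) * s + (hu + del))) + E s * (K + del)) by ring.
  rewrite HP. lra.
Qed.

Let Dop := fun s => 0 < s < T.
Let Dcl := fun s => 0 <= s <= T.
Let G1 := fun a b c => h a b c * u1 a b c.
Let G2 := fun a b c => h a b c * u2 a b c.

Lemma h_ctd x y t : Dcl t -> ctd Dcl h x y t.
Proof. intros Ht. apply reg_ctd; auto. Qed.
Lemma h_ctd_op x y t : Dop t -> ctd Dop h x y t.
Proof. intros Ht. apply ctd_mono with Dcl. unfold Dop, Dcl; intros; lra. apply h_ctd. unfold Dop, Dcl in *; lra. Qed.
Lemma dth_ctd x y t : Dop t -> ctd Dop (dt h) x y t.
Proof. intros Ht. exact (reg_ctd_pd T h Defs.Dt x y t Hrh Ht). Qed.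
Lemma dxh_ctd x y t : Dop t -> ctd Dop (dx h) x y t.
Proof. intros Ht. exact (reg_ctd_pd T h Defs.Dx x y t Hrh Ht). Qed.
Lemma dyh_ctd x y t : Dop t -> ctd Dop (dy h) x y t.
Proof. intros Ht. exact (reg_ctd_pd T h Defs.Dy x y t Hrh Ht). Qed.
Lemma uop (u : R -> R -> R -> R) x y t : smooth3 u -> ctd Dop u x y t.
Proof. intros Hu. apply ctd_mono with (fun _ => True). auto. apply u_ctd; auto. Qed.
Lemma uxop (u : R -> R -> R -> R) x y t : smooth3 u -> ctd Dop (dx u) x y t.
Proof. intros Hu. apply ctd_mono with (fun _ => True). auto. apply ux_ctd; auto. Qed.
Lemma uyop (u : R -> R -> R -> R) x y t : smooth3 u -> ctd Dop (dy u) x y t.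
Proof. intros Hu. apply ctd_mono with (fun _ => True). auto. apply uy_ctd; auto. Qed.

Lemma exh x y t d : Dop t -> ex_pd d h x y t.
Proof. intros Ht. apply Hrh. exact Ht. Qed.

Lemma dxG1_eq x y t : Dop t -> dx G1 x y t = dx h x y t * u1 x y t + h x y t * dx u1 x y t.
Proof.
intros Ht. unfold dx, G1. apply (Derive_mult (fun z => h z y t) (fun z => u1 z y t)).
apply (exh x y t Defs.Dx Ht). apply (u_ex Defs.Dx u1); auto.
Qed.
Lemma dyG2_eq x y t : Dop t -> dy G2 x y t = dy h x y t * u2 x y t + h x y t * dy u2 x y t.
Proof.
intros Ht. unfold dy, G2. apply (Derive_mult (fun z => h x z t) (fun z => u2 x z t)).
apply (exh x y t Defs.Dy Ht). apply (u_ex Defs.Dy u2); auto.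
Qed.

Lemma dxG1_ctd x y t : Dop t -> ctd Dop (dx G1) x y t.
Proof.
intros Ht. apply ctd_ext with (fun a b c => dx h a b c * u1 a b c + h a b c * dx u1 a b c); auto.
- intros a b c Hc. symmetry. apply dxG1_eq; auto.
- apply ctd_plus; apply ctd_mult; auto using dxh_ctd, uop, h_ctd_op, uxop.
Qed.
Lemma dyG2_ctd x y t : Dop t -> ctd Dop (dy G2) x y t.
Proof.
intros Ht. apply ctd_ext with (fun a b c => dy h a b c * u2 a b c + h a b c * dy u2 a b c); auto.
- intros a b c Hc. symmetry. apply dyG2_eq; auto.
- apply ctd_plus; apply ctd_mult; auto using dyh_ctd, uop, h_ctd_op, uyop.
Qed.
Lemma G1_ctd x y t : Dop t -> ctd Dop G1 x y t.
Proof. intros Ht. unfold G1. apply ctd_mult; auto using h_ctd_op, uop. Qed.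
Lemma G2_ctd x y t : Dop t -> ctd Dop G2 x y t.
Proof. intros Ht. unfold G2. apply ctd_mult; auto using h_ctd_op, uop. Qed.

Let Sf := fun x y t => S_h f om nu (h x y t) (A x y t).

Lemma S_eq x y t : Dop t -> Sf x y t = dt h x y t + dx G1 x y t + dy G2 x y t.
Proof. intros Ht. unfold Sf. rewrite <- (Hpde_h x y t Ht). unfold divflux. unfold G1, G2. ring. Qed.

Lemma Sf_ctd x y t : Dop t -> ctd Dop Sf x y t.
Proof.
intros Ht. apply ctd_ext with (fun a b c => dt h a b c + dx G1 a b c + dy G2 a b c); auto.
- intros a b c Hc. symmetry. apply S_eq; auto.
- apply ctd_plus; [apply ctd_plus|]; auto using dth_ctd, dxG1_ctd, dyG2_ctd.
Qed.

Lemma loc_op t : Dop t -> locally t (fun z => Dop z).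
Proof.
intros Ht. unfold Dop in *. cbv beta in *.
assert (Hp : 0 < Rmin t (T - t)) by (apply Rmin_pos; lra).
exists (mkposreal _ Hp). intros z Hz.
assert (Hz' : Rabs (z - t) < Rmin t (T - t)) by (apply ball_R_iff in Hz; exact Hz).
assert (Q1 := Rmin_l t (T - t)). assert (Q2 := Rmin_r t (T - t)).
apply Rabs_def2 in Hz'. cbv beta. lra.
Qed.

Lemma inner_der x t : Dop t ->
  is_derive (fun z => RInt (fun y => h x y z) 0 1) t (RInt (fun y => dt h x y t) 0 1).
Proof.
intros Ht.
apply (is_derive_RInt_param (fun z y => h x y z) 0 1 t).
- eapply filter_imp; [|exact (loc_op t Ht)]. intros z Hz y _. apply (exh x y z Defs.Dt Hz).
- intros y _. apply (ctd_2d_ty (dt h) x y t).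
  apply ctd_interior with Dop 0 T. exact Ht. intros s Hs; exact Hs. apply dth_ctd; auto.
- eapply filter_imp; [|exact (loc_op t Ht)]. intros z Hz. apply exRInt_y with Dop; auto.
  intros y. apply h_ctd_op; auto.
Qed.

Lemma loc_op2 t : Dop t -> exists d, 0 < d /\ forall z, Rabs (z - t) < d -> Dop z.
Proof.
intros Ht. unfold Dop in *. cbv beta in *.
exists (Rmin t (T - t)). split. apply Rmin_pos; lra.
intros z Hz. assert (Q1 := Rmin_l t (T - t)). assert (Q2 := Rmin_r t (T - t)).
apply Rabs_def2 in Hz. cbv beta. lra.
Qed.

Lemma outer_der t0 : Dop t0 ->
  is_derive (fun z => RInt (fun x => RInt (fun y => h x y z) 0 1) 0 1) t0
    (RInt (fun x => RInt (fun y => dt h x y t0) 0 1) 0 1).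
Proof.
intros Ht0.
assert (E1 : RInt (fun x => RInt (fun y => dt h x y t0) 0 1) 0 1 =
  RInt (fun x => Derive (fun u => RInt (fun y => h x y u) 0 1) t0) 0 1).
{ apply RInt_extR. intros x _. symmetry. apply is_derive_unique. apply inner_der; auto. }
rewrite E1.
apply (is_derive_RInt_param (fun z x => RInt (fun y => h x y z) 0 1) 0 1 t0).
- eapply filter_imp; [|exact (loc_op t0 Ht0)]. intros z Hz x _. eexists. apply inner_der; auto.
- intros x _ eps.
  destruct (RInt_cont2 (dt h) Dop x t0 Ht0 (fun a b c Hc => dth_ctd a b c Hc) eps (cond_pos eps)) as [d [Hd K1]].
  destruct (loc_op2 t0 Ht0) as [d2 [Hd2 K2]].
  exists (mkposreal _ (Rmin_pos _ _ Hd Hd2)). simpl. intros u v Hu Hv.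
  assert (Q1 := Rmin_l d d2). assert (Q2 := Rmin_r d d2).
  assert (Du : Dop u) by (apply K2; lra).
  assert (Ev : Derive (fun z => RInt (fun y => h v y z) 0 1) u = RInt (fun y => dt h v y u) 0 1)
    by (apply is_derive_unique; apply inner_der; auto).
  assert (Ex : Derive (fun z => RInt (fun y => h x y z) 0 1) t0 = RInt (fun y => dt h x y t0) 0 1)
    by (apply is_derive_unique; apply inner_der; auto).
  rewrite Ev, Ex.
  apply K1; auto; lra.
- eapply filter_imp; [|exact (loc_op t0 Ht0)]. intros z Hz. apply exR_cont. intros x _.
  apply (ctd_slice_y Dop (fun _ b' t' => RInt (fun y => h b' y t') 0 1) 0 x z); auto.
  apply ctd_RInt; auto. intros; apply h_ctd_op; auto.
Qed.

Lemma cont_of_RInt_cont2 (g : R -> R -> R -> R) t0 x :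
  Dop t0 -> (forall a b c, Dop c -> ctd Dop g a b c) ->
  continuous (fun z => RInt (fun y => g z y t0) 0 1) x.
Proof.
intros Ht0 Hc. apply ed_cont. intros eps He.
destruct (RInt_cont2 g Dop x t0 Ht0 Hc eps He) as [d [Hd K1]].
exists d; split; auto. intros x' Hx'. apply K1; auto. rewrite Rminus_diag, Rabs_R0; lra.
Qed.

Lemma dyG2_int x t0 : Dop t0 -> RInt (fun y => dy G2 x y t0) 0 1 = 0.
Proof.
intros Ht0.
change (RInt (Derive (fun w => G2 x w t0)) 0 1 = 0).
rewrite RInt_Derive.
- unfold G2. destruct (Hph x 0 t0) as [_ P1]. destruct (Hp2 x 0 t0) as [_ P2].
  rewrite Rplus_0_l in P1, P2. rewrite P1, P2. apply Rminus_diag_eq. reflexivity.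
- intros z _. unfold G2. apply ex_derive_mult. apply (exh x z t0 Defs.Dy Ht0). apply (u_ex Defs.Dy u2); auto.
- intros z _. apply (ctd_slice_y Dop (dy G2) x z t0); auto. apply dyG2_ctd; auto.
Qed.

Lemma Phi_der x t0 : Dop t0 ->
  is_derive (fun z => RInt (fun y => G1 z y t0) 0 1) x (RInt (fun y => dx G1 x y t0) 0 1).
Proof.
intros Ht0.
apply (is_derive_RInt_param (fun z y => G1 z y t0) 0 1 x).
- apply filter_forall. intros z y _. unfold G1. apply ex_derive_mult.
  apply (exh z y t0 Defs.Dx Ht0). apply (u_ex Defs.Dx u1); auto.
- intros y _. apply (ctd_2d_xy Dop (dx G1) x y t0); auto. apply dxG1_ctd; auto.
- apply filter_forall. intros z. apply exRInt_y with Dop; auto. intros; apply G1_ctd; auto.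
Qed.

Lemma q_int t0 : Dop t0 -> RInt (fun x => RInt (fun y => dx G1 x y t0) 0 1) 0 1 = 0.
Proof.
intros Ht0.
set (Phi := fun z => RInt (fun y => G1 z y t0) 0 1).
assert (ED : forall x, Derive Phi x = RInt (fun y => dx G1 x y t0) 0 1)
  by (intros x; apply is_derive_unique; apply Phi_der; auto).
transitivity (RInt (Derive Phi) 0 1).
{ apply RInt_extR. intros x _. rewrite ED. reflexivity. }
rewrite RInt_Derive.
- unfold Phi. rewrite (RInt_extR (fun y => G1 1 y t0) (fun y => G1 0 y t0)). apply Rminus_diag_eq. reflexivity.
  intros y _. unfold G1. destruct (Hph 0 y t0) as [P1 _]. destruct (Hp1 0 y t0) as [P2 _].
  rewrite Rplus_0_l in P1, P2. rewrite P1, P2. reflexivity.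
- intros z _. eexists. apply Phi_der; auto.
- intros z _. apply ed_cont. intros eps He.
  destruct (RInt_cont2 (dx G1) Dop z t0 Ht0 (fun a b c Hc => dxG1_ctd a b c Hc) eps He) as [d [Hd K1]].
  exists d; split; auto. intros x' Hx'. rewrite !ED. apply K1; auto. rewrite Rminus_diag, Rabs_R0; lra.
Qed.

Lemma outer_val t0 : Dop t0 -> Rabs (RInt (fun x => RInt (fun y => dt h x y t0) 0 1) 0 1) <= K.
Proof.
intros Ht0.
set (Hx := fun x => RInt (fun y => dt h x y t0) 0 1).
set (sx := fun x => RInt (fun y => Sf x y t0) 0 1).
set (qx := fun x => RInt (fun y => dx G1 x y t0) 0 1).
assert (exS : forall x, ex_RInt (fun y => Sf x y t0) 0 1) by (intros; apply exRInt_y with Dop; auto; intros; apply Sf_ctd; auto).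
assert (exG : forall x, ex_RInt (fun y => dx G1 x y t0) 0 1) by (intros; apply exRInt_y with Dop; auto; intros; apply dxG1_ctd; auto).
assert (exG2 : forall x, ex_RInt (fun y => dy G2 x y t0) 0 1) by (intros; apply exRInt_y with Dop; auto; intros; apply dyG2_ctd; auto).
assert (Hb : forall x, Hx x = sx x - qx x).
{ intros x. unfold Hx, sx, qx.
  rewrite (RInt_extR (fun y => dt h x y t0) (fun y => (Sf x y t0 - dx G1 x y t0) - dy G2 x y t0)).
  2: { intros y _. rewrite S_eq by auto. ring. }
  rewrite (RInt_minusR (fun y => Sf x y t0 - dx G1 x y t0) (fun y => dy G2 x y t0)).
  rewrite (RInt_minusR (fun y => Sf x y t0) (fun y => dx G1 x y t0)).
  rewrite dyG2_int by exact Ht0.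
  exact (Rminus_0_r _).
  exact (exS x). exact (exG x).
  apply ex_RInt_minusR. exact (exS x). exact (exG x). exact (exG2 x). }
assert (cH : forall x, continuous Hx x) by (intros; apply cont_of_RInt_cont2; auto; intros; apply dth_ctd; auto).
assert (cq : forall x, continuous qx x) by (intros; apply cont_of_RInt_cont2; auto; intros; apply dxG1_ctd; auto).
assert (exH : ex_RInt Hx 0 1) by (apply exR_cont; auto).
assert (exq : ex_RInt qx 0 1) by (apply exR_cont; auto).
assert (exs : ex_RInt sx 0 1).
{ apply ex_RInt_extR with (fun x => Hx x + qx x). intros x _. rewrite Hb. unfold Rminus. rewrite Rplus_assoc, Rplus_opp_l, Rplus_0_r. reflexivity.
  apply ex_RInt_plusR; auto. }
assert (EI : RInt Hx 0 1 = RInt sx 0 1).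
{ rewrite (RInt_extR Hx (fun x => sx x - qx x)) by (intros; apply Hb).
  rewrite RInt_minusR by auto. unfold qx. rewrite q_int by auto. exact (Rminus_0_r _). }
change (Rabs (RInt Hx 0 1) <= K). rewrite EI.
replace K with ((1 - 0) * K) by ring.
apply abs_RInt_le_const; auto. lra.
intros x _. unfold sx. replace K with ((1 - 0) * K) by ring.
apply abs_RInt_le_const; auto. lra.
intros y _. unfold Sf. apply S_bnd. unfold Dop in Ht0; cbv beta in Ht0; lra.
Qed.

Let Mf := fun s => RInt (fun x => RInt (fun y => h x y s) 0 1) 0 1.

Lemma M_cont t0 : Dcl t0 -> forall eps, 0 < eps -> exists d, 0 < d /\
  forall t, Rabs (t - t0) < d -> Dcl t -> Rabs (Mf t - Mf t0) < eps.
Proof.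
intros Ht0 eps He.
destruct (RInt_cont2 (fun a b c => RInt (fun y => h b y c) 0 1) Dcl 0 t0 Ht0) with (eps := eps) as [d [Hd K1]]; auto.
{ intros a b c Hc. apply ctd_RInt; auto. intros; apply h_ctd; auto. }
exists d; split; auto. intros t Ht Dt. apply (K1 0 t); auto. rewrite Rminus_diag, Rabs_R0; lra.
Qed.

Lemma M_der s : Dop s -> is_derive Mf s (RInt (fun x => RInt (fun y => dt h x y s) 0 1) 0 1).
Proof. intros Hs. apply outer_der; auto. Qed.

Lemma mass_bnd t : 0 <= t <= T -> Rabs (Mf t - Mf 0) <= K * t.
Proof.
intros Ht. destruct (Req_dec t 0) as [Ht0|Ht0].
{ subst t. rewrite Rminus_diag, Rabs_R0, Rmult_0_r. lra. }
assert (HK := K_ge0).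
apply Rnot_lt_le. intro Hgap.
set (g := Rabs (Mf t - Mf 0) - K * t).
assert (Hg : 0 < g) by (unfold g; lra).
destruct (M_cont t) with (eps := g / 3) as [d1 [Hd1 K1]]. unfold Dcl; cbv beta; lra. lra.
destruct (M_cont 0) with (eps := g / 3) as [d2 [Hd2 K2]]. unfold Dcl; cbv beta; lra. lra.
set (eta := Rmin (Rmin d1 d2) (t / 2) / 2).
assert (Q1 := Rmin_l (Rmin d1 d2) (t / 2)). assert (Q2 := Rmin_r (Rmin d1 d2) (t / 2)).
assert (Q3 := Rmin_l d1 d2). assert (Q4 := Rmin_r d1 d2).
assert (Hq : 0 < Rmin (Rmin d1 d2) (t / 2)) by (repeat apply Rmin_pos; lra).
assert (He1 : 0 < eta) by (unfold eta; lra).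
assert (He2 : eta < t - eta) by (unfold eta; lra).
assert (A1 : Rabs (Mf (t - eta) - Mf t) < g / 3).
{ apply K1. rewrite Rabs_left by lra. unfold eta; lra. unfold Dcl; cbv beta; lra. }
assert (A2 : Rabs (Mf eta - Mf 0) < g / 3).
{ apply K2. rewrite Rminus_0_r, Rabs_pos_eq by lra. unfold eta; lra. unfold Dcl; cbv beta; lra. }
assert (A3 : Rabs (Mf (t - eta) - Mf eta) <= K * t).
{ destruct (MVT_gen Mf eta (t - eta) (fun s => RInt (fun x => RInt (fun y => dt h x y s) 0 1) 0 1)) as [c [Hc Ec]].
  - intros s Hs. rewrite Rmin_left, Rmax_right in Hs by lra. apply M_der. unfold Dop; cbv beta; lra.
  - intros s Hs. rewrite Rmin_left, Rmax_right in Hs by lra. apply continuity_pt_filterlim.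
    apply (@ex_derive_continuous R_AbsRing R_NormedModule Mf s). eexists. apply M_der. unfold Dop; cbv beta; lra.
  - rewrite Rmin_left, Rmax_right in Hc by lra. rewrite Ec. rewrite Rabs_mult.
    assert (B := outer_val c ltac:(unfold Dop; cbv beta; lra)).
    rewrite (Rabs_pos_eq (t - eta - eta)) by lra.
    assert (Rabs (RInt (fun x => RInt (fun y => dt h x y c) 0 1) 0 1) * (t - eta - eta) <= K * (t - eta - eta))
      by (apply Rmult_le_compat_r; lra).
    assert (K * (t - eta - eta) <= K * t) by (apply Rmult_le_compat_l; lra). lra. }
assert (Tri : Rabs (Mf t - Mf 0) <= Rabs (Mf (t - eta) - Mf t) + Rabs (Mf (t - eta) - Mf eta) + Rabs (Mf eta - Mf 0)).
{ replace (Mf t - Mf 0) with (- (Mf (t - eta) - Mf t) + (Mf (t - eta) - Mf eta) + (Mf eta - Mf 0)) by ring.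
  eapply Rle_trans. apply Rabs_triang. rewrite <- (Rabs_Ropp (Mf (t - eta) - Mf t)).
  apply Rplus_le_compat_r. apply Rabs_triang. }
unfold g in *. lra.
Qed.

Lemma final_concl :
  (forall x y t, 0 <= t <= T -> 0 <= h x y t) /\
  (forall t, 0 <= t <= T ->
     6 * K * t <= hl ->
     exp (RInt (fun s => LinfOmega (fun x y => divu u1 u2 x y s)) 0 t) <= 2 ->
     forall x y, hl / 4 <= h x y t <= 4 * hu) /\
  (forall t, 0 <= t <= T ->
     6 * K * torus_meas * t <= intOmega hin ->
     intOmega hin / 2 <= intOmega (fun x y => h x y t) <= 2 * intOmega hin).
Proof.
assert (HK := K_ge0).
split; [|split].
- intros; apply h_nonneg; auto.
- intros t Ht H6 HE x y. change (E t <= 2) in HE.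
  assert (Hlu : hl <= hu) by (specialize (Hhin 0 0); lra).
  assert (HEp := Et_pos u1 u2 t). fold E in HEp.
  split.
  + destruct (Req_dec t 0) as [Ht0|Ht0].
    * subst t. rewrite Hin_h. specialize (Hhin x y). lra.
    * assert (Hlo := h_lower t x y ltac:(lra) HE).
      assert (Hi : / 2 <= / E t) by (apply Rinv_le_contravar; lra).
      assert (Hp : 0 <= hl - 2 * K * t) by nra.
      assert ((hl - 2 * K * t) * / 2 <= (hl - 2 * K * t) * / E t) by (apply Rmult_le_compat_l; lra).
      lra.
  + assert (Hup := h_upper t x y Ht).
    assert (Hp : 0 <= hu + K * t) by nra.
    assert (E t * (hu + K * t) <= 2 * (hu + K * t)) by (apply Rmult_le_compat_r; lra).
    lra.
- intros t Ht H6. unfold torus_meas in H6.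
  assert (EM : intOmega hin = Mf 0).
  { unfold intOmega, Mf. apply RInt_extR. intros x _. apply RInt_extR. intros y _. rewrite Hin_h. reflexivity. }
  change (intOmega (fun x y => h x y t)) with (Mf t).
  rewrite EM in *.
  assert (B := mass_bnd t Ht).
  apply Rabs_le_between' in B.
  assert (0 <= K * t) by (apply Rmult_le_pos; lra).
  lra.
Qed.

End Main.

Theorem mainTheorem3
  (om nu T h0 fl fu hl hu : R) (f : R -> R)
  (u1 u2 h A : R -> R -> R -> R) (hin Ain : R -> R -> R) :
  0 < om < 1 -> 0 < nu < 1 -> 0 < T -> 0 < h0 ->
  smooth1 f -> (forall z, fl <= f z <= fu) ->
  smooth3 u1 -> smooth3 u2 -> periodic3 u1 -> periodic3 u2 ->
  periodic3 h -> periodic3 A ->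
  classical_reg T h -> classical_reg T A ->
  (forall x y, h x y 0 = hin x y) -> (forall x y, A x y 0 = Ain x y) ->
  (forall x y t, 0 < t < T ->
     dt h x y t + divflux h u1 u2 x y t = S_h f om nu (h x y t) (A x y t)) ->
  (forall x y t, 0 < t < T ->
     dt A x y t + divflux A u1 u2 x y t =
       S_A f h0 om nu (h x y t) (A x y t)
       + A x y t * divu u1 u2 x y t * chi_A om (A x y t)) ->
  0 < hl -> (forall x y, hl <= hin x y <= hu) ->
  (forall x y, 0 <= Ain x y <= 1) ->
  let K := Rabs fu + Rabs fl in
  (forall x y t, 0 <= t <= T -> 0 <= h x y t) /\
  (forall t, 0 <= t <= T ->
     6 * K * t <= hl ->
     exp (RInt (fun s => LinfOmega (fun x y => divu u1 u2 x y s)) 0 t) <= 2 ->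
     forall x y, hl / 4 <= h x y t <= 4 * hu) /\
  (forall t, 0 <= t <= T ->
     6 * K * torus_meas * t <= intOmega hin ->
     intOmega hin / 2 <= intOmega (fun x y => h x y t) <= 2 * intOmega hin).
Proof.
intros Hom Hnu HT Hh0 Hfs Hf Hu1 Hu2 Hp1 Hp2 Hph HpA Hrh HrA Hin_h Hin_A Hpde_h Hpde_A Hhl Hhin HAin K.
exact (final_concl om nu T h0 fl fu hl hu f u1 u2 h A hin Ain Hom Hnu HT Hh0 Hf Hu1 Hu2 Hp1 Hp2 Hph HpA Hrh HrA Hin_h Hin_A Hpde_h Hpde_A Hhl Hhin HAin).
Qed.
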